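(* Let $S(t,z)=\sum_\pi t^{|\pi|}z^{\mathrm{rmax}(\pi)}$ over all separable permutations, which equals (with $r=\sqrt{t^2-6t+1}$) $$S(t,z)=\frac{4\sqrt{\left(-\frac{1}{4}r-tz+\frac{t}{4}+\frac{5}{4}\right)^2+r-t-1}-r+4tz+t-3}{2(r-t-1)}.$$ Define $$E(t,z_1,z_2,z_3)=z_1z_2z_3t+\frac{(S(t,z_1)+1)(S(t,z_2)+1)(S(t,z_3)+1)\,t^2z_1^2z_2z_3}{(1-S(t,z_1)S(t,z_3))(1-S(t,z_1)S(t,z_2))},$$ $$A(z_2,z_3)=S(t,z_2)\left(z_3t+\frac{S(t,z_3)^2}{S(t,z_3)+1}\right),\qquad D=1-A(z_2,z_3)-tz_2z_3,$$ and $E=E(t,z_1,z_2,z_3)$. For an ordered triple $T=(\mathrm{stat}_1,\mathrm{stat}_2,\mathrm{stat}_3)$ write $G_T=\sum_\pi t^{|\pi|}z_1^{\mathrm{stat}_1(\pi)}z_2^{\mathrm{stat}_2(\pi)}z_3^{\mathrm{stat}_3(\pi)}$. Then: (i) for every $T\in\{(\mathrm{lmax},\mathrm{rmax},\mathrm{lmin}),(\mathrm{lmin},\mathrm{rmin},\mathrm{lmax}),(\mathrm{rmin},\mathrm{rmax},\mathrm{lmin}),(\mathrm{rmax},\mathrm{rmin},\mathrm{lmax})\}$, $G_T$ over all separable permutations equals $E/D$; (ii) for $T\in\{(\mathrm{lmax},\mathrm{rmax},\mathrm{lmin}),(\mathrm{rmin},\mathrm{rmax},\mathrm{lmin})\}$,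 $G_T$ over reducible separable permutations equals $E-z_1z_2z_3t$, and over irreducible separable permutations equals $$\frac{1}{D}\Bigl(z_1z_2z_3t+\bigl(A(z_2,z_3)+tz_2z_3\bigr)\bigl(E-z_1z_2z_3t\bigr)\Bigr);$$ (iii) for $T\in\{(\mathrm{lmin},\mathrm{rmin},\mathrm{lmax}),(\mathrm{rmax},\mathrm{rmin},\mathrm{lmax})\}$, $G_T$ over irreducible separable permutations equals $E$, and over reducible separable permutations equals $$-z_1z_2z_3t+\frac{1}{D}\Bigl(z_1z_2z_3t+\bigl(A(z_2,z_3)+tz_2z_3\bigr)\bigl(E-z_1z_2z_3t\bigr)\Bigr).$$
   Context: A permutation of length $n$ is a word $\pi=\pi_1\cdots\pi_n$ containing each element of $[n]$ exactly once; $|\pi|=n$. For $\pi$ of length $m$, $\sigma$ of length $n$: $\pi\oplus\sigma=\pi_1\cdots\pi_m(\sigma_1+m)\cdots(\sigma_n+m)$, $\pi\ominus\sigma=(\pi_1+n)\cdots(\pi_m+n)\sigma_1\cdots\sigma_n$. Separable permutations are those of length $\ge1$ obtained from $1$ by repeatedly applying $\oplus,\ominus$ (equivalently, avoiding $2413$ and $3142$). The permutation $1$ is irreducible; a permutation of length $n\ge2$ is irreducible if there is no $i$, $2\le i\le n$, such that every element of $\pi_1\cdots\pi_{i-1}$ is less than every element of $\pi_i\cdots\pi_n$; reducible means not irreducible (length $\ge2$). $\pi_i$ is a left-to-right maximum (minimum) if $\pi_i>\pi_j$ ($\pi_i<\pi_j$) for all $j<i$, a right-to-left maximum (minimum) if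 $\pi_i>\pi_j$ ($\pi_i<\pi_j$) for all $j>i$; $\mathrm{lmax},\mathrm{lmin},\mathrm{rmax},\mathrm{rmin}$ count these. Square roots are the branches giving formal power series in $t$. *)

(* Defs.v *)
From HB Require Import structures.
From mathcomp Require Import all_boot all_order all_algebra all_fingroup.
From mathcomp Require Import mpoly.
From Stdlib Require Import ClassicalEpsilon.

Set Implicit Arguments.
Unset Strict Implicit.
Unset Printing Implicit Defensive.

Import Order.TTheory GRing.Theory Num.Theory.
Local Open Scope ring_scope.

Definition word (n : nat) (p : 'S_n) : seq nat := [seq (p i).+1 | i <- enum 'I_n].

Definition dsum (p s : seq nat) : seq nat := p ++ [seq (x + size p)%N | x <- s].
Definition dskew (p s : seq nat) : seq nat := [seq (x + size s)%N | x <- p] ++ s.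

Inductive separable : seq nat -> Prop :=
| sep_one : separable [:: 1%N]
| sep_sum p s : separable p -> separable s -> separable (dsum p s)
| sep_skew p s : separable p -> separable s -> separable (dskew p s).

Definition decP (P : Prop) : bool :=
  if excluded_middle_informative P then true else false.

Definition separableb (w : seq nat) : bool := decP (separable w).

(* reducible: length >= 2 and some split position i (2 <= i <= n), i.e. a
   nonempty proper prefix of length k = i-1 (1 <= k <= n-1), with every entry
   of the prefix smaller than every entry of the suffix. *)
Definition reducible (w : seq nat) : bool :=
  (2 <= size w)%N &&
  has (fun k => all (fun a => all (fun b => (a < b)%N) (drop k w)) (take k w))
      (iota 1 (size w).-1).

(* irreducible: the permutation 1, or length >= 2 and not reducible
   (all separable permutations have length >= 1). *)
Definition irreducible (w : seq nat) : bool := (1 <= size w)%N && ~~ reducible w.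

Definition lmax (w : seq nat) : nat :=
  count (fun i => all (fun j => (nth 0 w j < nth 0 w i)%N) (iota 0 i)) (iota 0 (size w)).
Definition lmin (w : seq nat) : nat :=
  count (fun i => all (fun j => (nth 0 w i < nth 0 w j)%N) (iota 0 i)) (iota 0 (size w)).
Definition rmax (w : seq nat) : nat :=
  count (fun i => all (fun j => (nth 0 w j < nth 0 w i)%N) (iota i.+1 (size w - i.+1)))
        (iota 0 (size w)).
Definition rmin (w : seq nat) : nat :=
  count (fun i => all (fun j => (nth 0 w i < nth 0 w j)%N) (iota i.+1 (size w - i.+1)))
        (iota 0 (size w)).

Definition fps (R : Type) := nat -> R.

Definition fadd (R : comRingType) (f g : fps R) : fps R := fun n => f n + g n.
Definition fopp (R : comRingType) (f : fps R) : fps R := fun n => - f n.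
Definition fsub (R : comRingType) (f g : fps R) : fps R := fun n => f n - g n.
Definition fmul (R : comRingType) (f g : fps R) : fps R :=
  fun n => \sum_(i < n.+1) f i * g (n - i)%N.
Definition fmono (R : comRingType) (c : R) (k : nat) : fps R :=
  fun n => if n == k then c else 0.
Definition fone (R : comRingType) : fps R := fmono 1 0.

Fixpoint finv_seq (R : comUnitRingType) (f : fps R) (n : nat) : seq R :=
  match n with
  | 0 => [:: (f 0%N)^-1]
  | m.+1 => let s := finv_seq f m in
            rcons s (- (f 0%N)^-1 * \sum_(i < m.+1) f i.+1 * nth 0 s (m - i)%N)
  end.
Definition finv (R : comUnitRingType) (f : fps R) : fps R :=
  fun n => nth 0 (finv_seq f n) n.
Definition fdiv (R : comUnitRingType) (f g : fps R) : fps R := fmul f (finv g).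

Definition Rz := {mpoly rat[3]}.
Definition z1 : Rz := 'X_(@Ordinal 3 0 isT).
Definition z2 : Rz := 'X_(@Ordinal 3 1 isT).
Definition z3 : Rz := 'X_(@Ordinal 3 2 isT).

Definition GF (st1 st2 st3 : seq nat -> nat) (P : seq nat -> bool) : fps Rz :=
  fun n => \sum_(p : 'S_n | P (word p))
             z1 ^+ st1 (word p) * z2 ^+ st2 (word p) * z3 ^+ st3 (word p).

Definition allsep (w : seq nat) : bool := separableb w.
Definition redsep (w : seq nat) : bool := separableb w && reducible w.
Definition irrsep (w : seq nat) : bool := separableb w && irreducible w.

Definition Sgf (z : Rz) : fps Rz :=
  fun n => \sum_(p : 'S_n | separableb (word p)) z ^+ rmax (word p).

Definition S1 := Sgf z1.
Definition S2 := Sgf z2.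
Definition S3 := Sgf z3.

Definition Tz : fps Rz := fmono (z1 * z2 * z3) 1.

Definition Egf : fps Rz :=
  fadd Tz
    (fdiv (fmul (fmul (fmul (fadd S1 (fone _)) (fadd S2 (fone _))) (fadd S3 (fone _)))
                (fmono (z1 ^+ 2 * z2 * z3) 2))
          (fmul (fsub (fone _) (fmul S1 S3)) (fsub (fone _) (fmul S1 S2)))).

Definition Agf : fps Rz :=
  fmul S2 (fadd (fmono z3 1) (fdiv (fmul S3 S3) (fadd S3 (fone _)))).

Definition Tz23 : fps Rz := fmono (z2 * z3) 1.

Definition Dgf : fps Rz := fsub (fsub (fone _) Agf) Tz23.

Definition Fgf : fps Rz :=
  fdiv (fadd Tz (fmul (fadd Agf Tz23) (fsub Egf Tz))) Dgf.

(* Main.v *)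
Require Import Defs.
From HB Require Import structures.
From mathcomp Require Import all_boot all_order all_algebra all_fingroup.
From mathcomp Require Import mpoly.
From mathcomp Require Import zify.
From mathcomp Require Import boolp.
From mathcomp Require Import ring.
From Stdlib Require Import ClassicalEpsilon.

Set Implicit Arguments.
Unset Strict Implicit.
Unset Printing Implicit Defensive.
Import Order.TTheory GRing.Theory Num.Theory.

Section Comb.


Definition PermL n := permutations (iota 1 n).
Definition isperm n (w : seq nat) := perm_eq w (iota 1 n).

Lemma ispermP n w :
  isperm n w = [&& uniq w, size w == n & all (fun x => 0 < x <= n) w].
Proof.
apply/idP/idP.
- move=> pw; rewrite (perm_uniq pw) iota_uniq (perm_size pw) size_iota eqxx /=.
  rewrite (perm_all _ pw); apply/allP => x; rewrite mem_iota; lia.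
- case/and3P => u /eqP s /allP a.
  have sub : {subset w <= iota 1 n} by move=> x /a; rewrite mem_iota; lia.
  have sz : size (iota 1 n) <= size w by rewrite size_iota s.
  have [_ e] := uniq_min_size u sub sz.
  by apply: uniq_perm => //; apply: iota_uniq.
Qed.

Lemma isperm_size n w : isperm n w -> size w = n.
Proof. by rewrite ispermP => /and3P [_ /eqP -> _]. Qed.
Lemma isperm_uniq n w : isperm n w -> uniq w.
Proof. by rewrite ispermP => /and3P []. Qed.
Lemma isperm_mem n w x : isperm n w -> x \in w -> 0 < x <= n.
Proof. by rewrite ispermP => /and3P [_ _ /allP]; apply. Qed.

Lemma PermL_mem n w : (w \in PermL n) = isperm n w.
Proof. by rewrite mem_permutations. Qed.
Lemma PermL_uniq n : uniq (PermL n).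
Proof. exact: permutations_uniq. Qed.
Lemma PermL0 : PermL 0 = [:: [::]]. Proof. by []. Qed.
Lemma PermL1 : PermL 1 = [:: [:: 1]]. Proof. by []. Qed.

Definition blk k (w : seq nat) := all (fun a => all (fun b => a < b) (drop k w)) (take k w).
Definition sblk k (w : seq nat) := all (fun a => all (fun b => b < a) (drop k w)) (take k w).
Definition sred (w : seq nat) : bool :=
  (2 <= size w) && has (fun k => sblk k w) (iota 1 (size w).-1).
Definition part2 k (w : seq nat) := [seq x - k | x <- drop k w].
Definition cmp (w : seq nat) := [seq (size w).+1 - x | x <- w].

Lemma addn_inj k : injective (fun x => x + k).
Proof. by move=> x y /eqP; rewrite eqn_add2r => /eqP. Qed.

Lemma isperm_dsum a b : isperm (size a) a -> isperm (size b) b ->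
  isperm (size a + size b) (dsum a b).
Proof.
move=> pa pb; rewrite ispermP /dsum size_cat size_map eqxx all_cat cat_uniq.
rewrite (isperm_uniq pa) (map_inj_uniq (@addn_inj _)) (isperm_uniq pb) /= ?andbT.
apply/and3P; split.
- apply/hasPn => y /mapP [x xb ->]; apply/negP => ya.
  have := isperm_mem pa ya; have := isperm_mem pb xb; lia.
- apply/allP => x xa; have := isperm_mem pa xa; lia.
- apply/allP => y /mapP [x xb ->]; have := isperm_mem pb xb; lia.
Qed.

Lemma isperm_dskew a b : isperm (size a) a -> isperm (size b) b ->
  isperm (size a + size b) (dskew a b).
Proof.
move=> pa pb; rewrite ispermP /dskew size_cat size_map eqxx all_cat cat_uniq.
rewrite (isperm_uniq pb) (map_inj_uniq (@addn_inj _)) (isperm_uniq pa) /= ?andbT.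
apply/and3P; split.
- apply/hasPn => y yb; apply/negP => /mapP [x xa ey].
  have := isperm_mem pa xa; have := isperm_mem pb yb; lia.
- apply/allP => y /mapP [x xa ->]; have := isperm_mem pa xa; lia.
- apply/allP => x xb; have := isperm_mem pb xb; lia.
Qed.

Lemma blk_dsum a b : isperm (size a) a -> isperm (size b) b -> blk (size a) (dsum a b).
Proof.
move=> pa pb; rewrite /blk /dsum take_size_cat // drop_size_cat //.
apply/allP => x xa; apply/allP => y /mapP [z zb ->].
have := isperm_mem pa xa; have := isperm_mem pb zb; lia.
Qed.

Lemma sblk_dskew a b : isperm (size a) a -> isperm (size b) b ->
  sblk (size a) (dskew a b).
Proof.
move=> pa pb; rewrite /sblk /dskew take_size_cat ?size_map //.
rewrite drop_size_cat ?size_map //.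
apply/allP => x /mapP [z za ->]; apply/allP => y yb.
have := isperm_mem pa za; have := isperm_mem pb yb; lia.
Qed.

Lemma dsum_inj a b a' b' : size a = size a' -> dsum a b = dsum a' b' -> a = a' /\ b = b'.
Proof.
move=> s e.
have ea : a = a' by have := congr1 (take (size a)) e; rewrite /dsum take_size_cat // s take_size_cat.
split => //; move: e; rewrite /dsum ea => /eqP; rewrite eqseq_cat // => /andP [_ /eqP].
by move/(inj_map (@addn_inj _)).
Qed.

Lemma blk_parts n k w : isperm n w -> k <= n -> blk k w ->
  [/\ isperm k (take k w), isperm (n - k) (part2 k w) & w = dsum (take k w) (part2 k w)].
Proof.
move=> pw kn bw.
have sw := isperm_size pw; have uw := isperm_uniq pw.
have ut : uniq (take k w) by apply: take_uniq.
have ud : uniq (drop k w) by apply: drop_uniq.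
have st : size (take k w) = k by rewrite size_take sw; case: ltnP => //; lia.
have sd : size (drop k w) = n - k by rewrite size_drop sw.
have memw x : x \in take k w -> x \in w by apply: mem_take.
have memd x : x \in drop k w -> x \in w by apply: mem_drop.
have lt x y : x \in take k w -> y \in drop k w -> x < y.
  by move=> xt yd; move/allP: bw => /(_ x xt) /allP /(_ y yd).
have bt x : x \in take k w -> 0 < x <= k.
  move=> xt; have := isperm_mem pw (memw _ xt) => /andP [x0 xn]; rewrite x0 /=.
  have sub : {subset drop k w <= iota x.+1 (n - x)}.
    move=> y yd; rewrite mem_iota; have := lt _ _ xt yd; have := isperm_mem pw (memd _ yd); lia.
  have := uniq_leq_size ud sub; rewrite size_iota sd; lia.
have bd y : y \in drop k w -> k < y <= n.
  move=> yd; have := isperm_mem pw (memd _ yd) => /andP [y0 yn]; rewrite yn andbT.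
  have sub : {subset take k w <= iota 1 y.-1}.
    move=> x xt; rewrite mem_iota; have := lt _ _ xt yd; have := bt _ xt; lia.
  have := uniq_leq_size ut sub; rewrite size_iota st; lia.
split.
- rewrite ispermP ut st eqxx /=; apply/allP => x /bt; lia.
- rewrite ispermP /part2 size_map sd eqxx /=; apply/andP; split.
    rewrite map_inj_in_uniq // => x y xd yd /eqP; have := bd _ xd; have := bd _ yd.
    move=> h1 h2 /eqP; lia.
  apply/allP => z /mapP [y yd ->]; have := bd _ yd; lia.
- rewrite /dsum /part2 st -map_comp -{1}(cat_take_drop k w); congr (_ ++ _).
  transitivity (map id (drop k w)); first by rewrite map_id.
  apply/eq_in_map => y /bd /= h; lia.
Qed.

Lemma sep_perm w : separable w -> isperm (size w) w /\ 0 < size w.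
Proof.
elim => [|p s _ [pp p0] _ [ps s0]|p s _ [pp p0] _ [ps s0]].
- by [].
- rewrite /dsum size_cat size_map; split; [exact: isperm_dsum | lia].
- rewrite /dskew size_cat size_map; split; [exact: isperm_dskew | lia].
Qed.

Lemma first_last k w : 0 < k < size w ->
  nth 0 w 0 \in take k w /\ nth 0 w (size w).-1 \in drop k w.
Proof.
move=> /andP [k0 kw]; split.
- rewrite -(nth_take _ k0); apply: mem_nth; by rewrite size_take kw.
- have -> : (size w).-1 = k + ((size w).-1 - k) by lia.
  rewrite -nth_drop; apply: mem_nth; rewrite size_drop; move: kw; case: (size w) => //= m km; lia.
Qed.

Lemma first_cat (u v : seq nat) : 0 < size u -> nth 0 (u ++ v) 0 \in u.
Proof. by move=> u0; rewrite nth_cat u0 mem_nth. Qed.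
Lemma last_cat (u v : seq nat) : 0 < size v -> nth 0 (u ++ v) (size (u ++ v)).-1 \in v.
Proof.
move=> v0; rewrite nth_cat size_cat.
have -> : (size u + size v).-1 < size u = false by apply/negbTE; rewrite -subn1; lia.
apply: mem_nth; rewrite -subn1; move: v0; move: (size u) (size v) => a b; lia.
Qed.

Lemma blk_sblk k j w : 0 < k < size w -> 0 < j < size w -> blk k w -> sblk j w -> False.
Proof.
move=> hk hj b sb.
have [f1 l1] := first_last hk; have [f2 l2] := first_last hj.
move/allP: b => /(_ _ f1) /allP /(_ _ l1).
move/allP: sb => /(_ _ f2) /allP /(_ _ l2).
lia.
Qed.

Lemma blk_dskew_false p s k : isperm (size p) p -> isperm (size s) s ->
  0 < size p -> 0 < size s -> 0 < k < size (dskew p s) -> blk k (dskew p s) -> False.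
Proof.
move=> pp ps p0 s0 hk b.
have [f l] := first_last hk.
have fi : nth 0 (dskew p s) 0 \in [seq x + size s | x <- p] by apply: first_cat; rewrite size_map.
have li : nth 0 (dskew p s) (size (dskew p s)).-1 \in s by apply: last_cat.
move/allP: b => /(_ _ f) /allP /(_ _ l).
move: fi li; rewrite /dskew; set x := nth _ _ 0; set y := nth _ _ _.
move=> /mapP [z zp ->] yi; have := isperm_mem pp zp; have := isperm_mem ps yi; lia.
Qed.

Lemma sblk_dsum_false p s k : isperm (size p) p -> isperm (size s) s ->
  0 < size p -> 0 < size s -> 0 < k < size (dsum p s) -> sblk k (dsum p s) -> False.
Proof.
move=> pp ps p0 s0 hk b.
have [f l] := first_last hk.
have fi : nth 0 (dsum p s) 0 \in p by apply: first_cat.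
have li : nth 0 (dsum p s) (size (dsum p s)).-1 \in [seq x + size p | x <- s].
  by apply: last_cat; rewrite size_map.
move/allP: b => /(_ _ f) /allP /(_ _ l).
move: fi li; rewrite /dsum; set x := nth _ _ 0; set y := nth _ _ _.
move=> xi /mapP [z zs ->]; have := isperm_mem pp xi; have := isperm_mem ps zs; lia.
Qed.

Lemma sep_blk w : separable w -> forall k, 0 < k < size w -> blk k w ->
  separable (take k w) /\ separable (part2 k w).
Proof.
elim => [|p s Sp IHp Ss IHs|p s Sp IHp Ss IHs] k hk bw.
- by exfalso; move: hk => /=; lia.
- have [pp p0] := sep_perm Sp; have [ps s0] := sep_perm Ss.
  move: hk bw; rewrite /dsum size_cat size_map => hk bw.
  case: (ltngtP k (size p)) => [lt|gt|eq].
  + have ebw : blk k p.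
      move: bw; rewrite /blk take_cat drop_cat lt => /allP H; apply/allP => a ap.
      by have := H a ap; rewrite all_cat => /andP [].
    have hk' : 0 < k < size p by rewrite lt andbT; case/andP: hk.
    have [S1 S2] := IHp k hk' ebw.
    rewrite take_cat lt; split => //.
    have -> : part2 k (p ++ [seq x + size p | x <- s]) = dsum (part2 k p) s.
      rewrite /part2 /dsum drop_cat lt map_cat size_map size_drop -map_comp; congr (_ ++ _).
      apply: eq_map => x /=; lia.
    by apply: sep_sum.
  + have ebw : blk (k - size p) s.
      move: bw; rewrite /blk take_cat drop_cat ltnNge (ltnW gt) /= all_cat.
      rewrite -map_take -map_drop => /andP [_ /allP H]; apply/allP => a ap.
      have := H (a + size p) (map_f _ ap); rewrite all_map => /allP H2.
      by apply/allP => b bd; have := H2 b bd; rewrite /= ltn_add2r.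
    have hk' : 0 < k - size p < size s by move: hk gt; lia.
    have [S1 S2] := IHs _ hk' ebw.
    rewrite take_cat ltnNge (ltnW gt) /= -map_take; split.
      by apply: sep_sum.
    suff -> : part2 k (p ++ [seq x + size p | x <- s]) = part2 (k - size p) s by [].
    rewrite /part2 drop_cat ltnNge (ltnW gt) /= -map_drop -map_comp.
    apply: eq_map => x /=; lia.
  + rewrite eq take_size_cat //; split => //.
    suff -> : part2 (size p) (p ++ [seq x + size p | x <- s]) = s by [].
    rewrite /part2 drop_size_cat // -map_comp; transitivity (map id s); last by rewrite map_id.
    apply: eq_map => x /=; lia.
- exfalso; have [pp p0] := sep_perm Sp; have [ps s0] := sep_perm Ss.
  exact: (blk_dskew_false pp ps p0 s0 hk bw).
Qed.

Definition Lst (r : nat -> nat -> bool) (w : seq nat) :=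
  count (fun i => all (fun j => r (nth 0 w j) (nth 0 w i)) (iota 0 i)) (iota 0 (size w)).
Definition Rst (r : nat -> nat -> bool) (w : seq nat) :=
  count (fun i => all (fun j => r (nth 0 w j) (nth 0 w i)) (iota i.+1 (size w - i.+1)))
        (iota 0 (size w)).

Lemma lmaxE w : lmax w = Lst (fun a x => a < x) w. Proof. by []. Qed.
Lemma lminE w : lmin w = Lst (fun a x => x < a) w. Proof. by []. Qed.
Lemma rmaxE w : rmax w = Rst (fun a x => a < x) w. Proof. by []. Qed.
Lemma rminE w : rmin w = Rst (fun a x => x < a) w. Proof. by []. Qed.

Lemma all_iota_nth (P : pred nat) (w : seq nat) :
  all (fun j => P (nth 0 w j)) (iota 0 (size w)) = all P w.
Proof.
have -> : all (fun j => P (nth 0 w j)) (iota 0 (size w)) = all P (map (nth 0 w) (iota 0 (size w))).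
  by rewrite all_map.
by rewrite -/(mkseq _ _) mkseq_nth.
Qed.

Lemma Lst_nil r : Lst r [::] = 0. Proof. by []. Qed.
Lemma Rst_nil r : Rst r [::] = 0. Proof. by []. Qed.

Lemma Lst_rcons r w x : Lst r (rcons w x) = Lst r w + all (fun a => r a x) w.
Proof.
rewrite /Lst size_rcons -addn1 iotaD add0n count_cat /= addn0; congr (_ + _).
- apply: eq_in_count => i; rewrite mem_iota add0n => /andP [_ iw].
  apply: eq_in_all => j; rewrite mem_iota add0n => /andP [_ ji].
  by rewrite !nth_rcons iw (ltn_trans ji iw).
- rewrite nth_rcons ltnn eqxx.
  rewrite -(all_iota_nth (fun a => r a x)); congr nat_of_bool.
  apply: eq_in_all => j; rewrite mem_iota add0n => /andP [_ ji].
  by rewrite nth_rcons ji.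
Qed.

Lemma Rst_cons r x w : Rst r (x :: w) = Rst r w + all (fun a => r a x) w.
Proof.
rewrite /Rst /= addnC; congr (_ + _).
- rewrite -(addn0 1) iotaDl count_map; apply: eq_in_count => i /=.
  rewrite mem_iota add0n => /andP [_ iw].
  rewrite -(add1n i.+1) iotaDl all_map; by apply: eq_in_all => j _.
- rewrite subn1 /= -(all_iota_nth (fun a => r a x)); congr nat_of_bool.
  by rewrite -(addn0 1) iotaDl all_map; apply: eq_in_all => j _.
Qed.

Implicit Types (r : nat -> nat -> bool) (u v : seq nat).

Lemma Lst_cat r u v : (forall a b, a \in u -> b \in v -> r a b) ->
  Lst r (u ++ v) = Lst r u + Lst r v.
Proof.
elim/last_ind: v => [|v x IH] H; first by rewrite cats0 Lst_nil addn0.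
rewrite -rcons_cat !Lst_rcons IH; last by move=> a b au bv; apply: H => //; rewrite mem_rcons inE bv orbT.
rewrite all_cat.
have -> : all (fun a => r a x) u by apply/allP => a au; apply: H => //; rewrite mem_rcons inE eqxx.
by rewrite addnA.
Qed.

Lemma Lst_cat0 r u v : (forall a b, a \in u -> b \in v -> ~~ r a b) -> 0 < size u ->
  Lst r (u ++ v) = Lst r u.
Proof.
move=> H u0.
have key x : (forall a, a \in u -> ~~ r a x) -> all (fun a => r a x) u = false.
  by case: u u0 {H} => // a u _ K /=; rewrite (negbTE (K a (mem_head _ _))).
elim/last_ind: v H => [|v x IH] H; first by rewrite cats0.
rewrite -rcons_cat !Lst_rcons IH; last by move=> a b au bv; apply: H => //; rewrite mem_rcons inE bv orbT.
rewrite all_cat key ?addn0 // => a au; apply: H => //; by rewrite mem_rcons mem_head.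
Qed.

Lemma Rst_cat r u v : (forall a b, a \in u -> b \in v -> r b a) ->
  Rst r (u ++ v) = Rst r u + Rst r v.
Proof.
elim: u => [|x u IH] H //=.
rewrite !Rst_cons IH; last by move=> a b au bv; apply: H => //; rewrite inE au orbT.
rewrite all_cat.
have -> : all (fun a => r a x) v by apply/allP => b bv; apply: H => //; rewrite mem_head.
by rewrite andbT addnAC.
Qed.

Lemma Rst_cat0 r u v : (forall a b, a \in u -> b \in v -> ~~ r b a) -> 0 < size v ->
  Rst r (u ++ v) = Rst r v.
Proof.
move=> H v0.
have key x : (forall b, b \in v -> ~~ r b x) -> all (fun a => r a x) v = false.
  by case: v v0 {H} => // b v _ K /=; rewrite (negbTE (K b (mem_head _ _))).
elim: u H => [|x u IH] H //=.
rewrite !Rst_cons IH; last by move=> a b au bv; apply: H => //; rewrite inE au orbT.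
rewrite all_cat key ?andbF ?addn0 // => b bv; apply: H => //; by rewrite mem_head.
Qed.

Lemma Lst_map r r' f w : {in w &, forall a b, r (f a) (f b) = r' a b} ->
  Lst r (map f w) = Lst r' w.
Proof.
elim/last_ind: w => [|w x IH] H //.
rewrite map_rcons !Lst_rcons IH; last by move=> a b au bv; apply: H; rewrite mem_rcons inE ?au ?bv orbT.
rewrite all_map; congr (_ + nat_of_bool _); apply: eq_in_all => a aw /=.
by apply: H; rewrite mem_rcons inE ?aw ?eqxx ?orbT.
Qed.

Lemma Rst_map r r' f w : {in w &, forall a b, r (f a) (f b) = r' a b} ->
  Rst r (map f w) = Rst r' w.
Proof.
elim: w => [|x w IH] H //.
rewrite map_cons !Rst_cons IH; last by move=> a b au bv; apply: H; rewrite inE ?au ?bv orbT.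
rewrite all_map; congr (_ + nat_of_bool _); apply: eq_in_all => a aw /=.
by apply: H; rewrite inE ?aw ?eqxx ?orbT.
Qed.

Lemma dsum_lt a b : isperm (size a) a -> isperm (size b) b ->
  forall x y, x \in a -> y \in [seq z + size a | z <- b] -> x < y.
Proof.
move=> pa pb x y xa /mapP [z zb ->]; have := isperm_mem pa xa; have := isperm_mem pb zb; lia.
Qed.
Lemma dskew_gt a b : isperm (size a) a -> isperm (size b) b ->
  forall x y, x \in [seq z + size b | z <- a] -> y \in b -> y < x.
Proof.
move=> pa pb x y /mapP [z za ->] yb; have := isperm_mem pa za; have := isperm_mem pb yb; lia.
Qed.

Section Stats.
Variables (a b : seq nat).
Hypotheses (pa : isperm (size a) a) (pb : isperm (size b) b).
Hypotheses (a0 : 0 < size a) (b0 : 0 < size b).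

Let shL r k w : (forall x y, r (x + k) (y + k) = r x y) -> Lst r [seq z + k | z <- w] = Lst r w.
Proof. by move=> H; apply: Lst_map => x y _ _. Qed.
Let shR r k w : (forall x y, r (x + k) (y + k) = r x y) -> Rst r [seq z + k | z <- w] = Rst r w.
Proof. by move=> H; apply: Rst_map => x y _ _. Qed.
Let lt_sh k x y : (x + k < y + k) = (x < y). Proof. by rewrite ltn_add2r. Qed.
Let gt_sh k x y : (y + k < x + k) = (y < x). Proof. by rewrite ltn_add2r. Qed.

Lemma lmax_dsum : lmax (dsum a b) = lmax a + lmax b.
Proof.
rewrite !lmaxE /dsum Lst_cat; first by rewrite shL.
exact: (dsum_lt pa pb).
Qed.
Lemma lmin_dsum : lmin (dsum a b) = lmin a.
Proof.
rewrite !lminE /dsum Lst_cat0 // => x y xa yb; rewrite -leqNgt; apply: ltnW; exact: (dsum_lt pa pb).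
Qed.
Lemma rmax_dsum : rmax (dsum a b) = rmax b.
Proof.
rewrite !rmaxE /dsum Rst_cat0 ?shR ?size_map // => x y xa yb; rewrite -leqNgt; apply: ltnW; exact: (dsum_lt pa pb).
Qed.
Lemma rmin_dsum : rmin (dsum a b) = rmin a + rmin b.
Proof.
rewrite !rminE /dsum Rst_cat; first by rewrite shR.
exact: (dsum_lt pa pb).
Qed.
Lemma lmax_dskew : lmax (dskew a b) = lmax a.
Proof.
rewrite !lmaxE /dskew Lst_cat0 ?shL ?size_map // => x y xa yb.
rewrite -leqNgt; apply: ltnW; exact: (dskew_gt pa pb).
Qed.
Lemma lmin_dskew : lmin (dskew a b) = lmin a + lmin b.
Proof.
rewrite !lminE /dskew Lst_cat; first by rewrite shL.
move=> x y xa yb; exact: (dskew_gt pa pb).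
Qed.
Lemma rmax_dskew : rmax (dskew a b) = rmax a + rmax b.
Proof.
rewrite !rmaxE /dskew Rst_cat; first by rewrite shR.
move=> x y xa yb; exact: (dskew_gt pa pb).
Qed.
Lemma rmin_dskew : rmin (dskew a b) = rmin b.
Proof.
rewrite !rminE /dskew Rst_cat0 // => x y xa yb.
rewrite -leqNgt; apply: ltnW; exact: (dskew_gt pa pb).
Qed.
End Stats.

Lemma size_comp w : size (cmp w) = size w. Proof. by rewrite size_map. Qed.

Lemma comp_perm n w : isperm n w -> isperm n (cmp w).
Proof.
move=> pw; have sw := isperm_size pw; rewrite ispermP size_comp sw eqxx /cmp sw /=.
apply/andP; split.
- rewrite map_inj_in_uniq ?(isperm_uniq pw) // => x y xw yw /= e.
  have := isperm_mem pw xw; have := isperm_mem pw yw; lia.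
- apply/allP => z /mapP [x xw ->]; have := isperm_mem pw xw; lia.
Qed.

Lemma comp_invol n w : isperm n w -> cmp (cmp w) = w.
Proof.
move=> pw; rewrite /cmp size_map -map_comp (isperm_size pw).
transitivity (map id w); last by rewrite map_id.
apply/eq_in_map => x xw /=; have := isperm_mem pw xw; lia.
Qed.

Lemma comp_dsum a b : isperm (size a) a -> isperm (size b) b ->
  cmp (dsum a b) = dskew (cmp a) (cmp b).
Proof.
move=> pa pb; rewrite /cmp /dsum /dskew size_cat !size_map map_cat -!map_comp; congr (_ ++ _).
- apply/eq_in_map => x xa /=; have := isperm_mem pa xa; lia.
- apply/eq_in_map => x xb /=; have := isperm_mem pb xb; lia.
Qed.

Lemma comp_dskew a b : isperm (size a) a -> isperm (size b) b ->
  cmp (dskew a b) = dsum (cmp a) (cmp b).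
Proof.
move=> pa pb; rewrite /cmp /dsum /dskew size_cat !size_map map_cat -!map_comp; congr (_ ++ _).
- apply/eq_in_map => x xa /=; have := isperm_mem pa xa; lia.
- apply/eq_in_map => x xb /=; have := isperm_mem pb xb; lia.
Qed.

Lemma sep_comp w : separable w -> separable (cmp w).
Proof.
elim => [|p s Sp IHp Ss IHs|p s Sp IHp Ss IHs]; first exact: sep_one.
- have [pp _] := sep_perm Sp; have [ps _] := sep_perm Ss.
  by rewrite comp_dsum //; apply: sep_skew.
- have [pp _] := sep_perm Sp; have [ps _] := sep_perm Ss.
  by rewrite comp_dskew //; apply: sep_sum.
Qed.

Lemma sep_compE n w : isperm n w -> separable (cmp w) <-> separable w.
Proof.
move=> pw; split; last exact: sep_comp.
by move=> /sep_comp; rewrite (comp_invol pw).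
Qed.

Lemma comp_anti n w : isperm n w ->
  {in w &, forall a b, ((size w).+1 - a < (size w).+1 - b) = (b < a)}.
Proof.
move=> pw a b aw bw; have := isperm_mem pw aw; have := isperm_mem pw bw.
rewrite (isperm_size pw) => h1 h2; apply/idP/idP => h; lia.
Qed.

Lemma lmax_comp n w : isperm n w -> lmax (cmp w) = lmin w.
Proof. move=> pw; rewrite lmaxE lminE; apply: Lst_map; exact: comp_anti pw. Qed.
Lemma lmin_comp n w : isperm n w -> lmin (cmp w) = lmax w.
Proof. move=> pw; rewrite lmaxE lminE; apply: Lst_map => a b aw bw; exact: comp_anti pw _ _ bw aw. Qed.
Lemma rmax_comp n w : isperm n w -> rmax (cmp w) = rmin w.
Proof. move=> pw; rewrite rmaxE rminE; apply: Rst_map; exact: comp_anti pw. Qed.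
Lemma rmin_comp n w : isperm n w -> rmin (cmp w) = rmax w.
Proof. move=> pw; rewrite rmaxE rminE; apply: Rst_map => a b aw bw; exact: comp_anti pw _ _ bw aw. Qed.

Lemma blk_comp n k w : isperm n w -> blk k (cmp w) = sblk k w.
Proof.
move=> pw; rewrite /blk /sblk /cmp -map_take -map_drop all_map.
apply: eq_in_all => a /mem_take aw /=; rewrite all_map; apply: eq_in_all => b /mem_drop bw /=.
exact: comp_anti pw _ _ aw bw.
Qed.
Lemma sblk_comp n k w : isperm n w -> sblk k (cmp w) = blk k w.
Proof.
move=> pw; rewrite /blk /sblk /cmp -map_take -map_drop all_map.
apply: eq_in_all => a /mem_take aw /=; rewrite all_map; apply: eq_in_all => b /mem_drop bw /=.
exact: comp_anti pw _ _ bw aw.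
Qed.

Lemma red_comp n w : isperm n w -> reducible (cmp w) = sred w.
Proof.
move=> pw; rewrite /reducible /sred size_comp; congr (_ && _).
by apply: eq_has => k; exact: (blk_comp k pw).
Qed.
Lemma sred_comp n w : isperm n w -> sred (cmp w) = reducible w.
Proof.
move=> pw; rewrite /reducible /sred size_comp; congr (_ && _).
by apply: eq_has => k; exact: (sblk_comp k pw).
Qed.

Lemma sepbP w : reflect (separable w) (separableb w).
Proof. rewrite /separableb /Defs.decP; destruct (excluded_middle_informative (separable w)); by constructor. Qed.

Lemma perm1 w : isperm 1 w -> w = [:: 1].
Proof.
rewrite ispermP => /and3P [_ /eqP s /allP a]; case: w s a => [|x [|y w]] //= _ a.
by have := a x (mem_head _ _); case: x {a} => [|[|x]].
Qed.

Lemma red_size w : reducible w -> 2 <= size w.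
Proof. by case/andP. Qed.
Lemma sred_size w : sred w -> 2 <= size w.
Proof. by case/andP. Qed.

Lemma red_blk w : reducible w = has (fun k => (0 < k < size w) && blk k w) (iota 0 (size w)).
Proof.
rewrite /reducible; apply/idP/idP.
- case/andP => s2 /hasP [k]; rewrite mem_iota => kr bk; apply/hasP; exists k.
    rewrite mem_iota; move: kr s2; rewrite -subn1; lia.
  apply/andP; split; last exact: bk.
  by move: kr s2; rewrite -subn1; lia.
- case/hasP => k _ /andP [hk bk]; apply/andP; split; first by move: hk; lia.
  apply/hasP; exists k => //; rewrite mem_iota; move: hk; rewrite -subn1; lia.
Qed.

Lemma sred_sblk w : sred w = has (fun k => (0 < k < size w) && sblk k w) (iota 0 (size w)).
Proof.
rewrite /sred; apply/idP/idP.
- case/andP => s2 /hasP [k]; rewrite mem_iota => kr bk; apply/hasP; exists k.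
    rewrite mem_iota; move: kr s2; rewrite -subn1; lia.
  apply/andP; split; last exact: bk.
  by move: kr s2; rewrite -subn1; lia.
- case/hasP => k _ /andP [hk bk]; apply/andP; split; first by move: hk; lia.
  apply/hasP; exists k => //; rewrite mem_iota; move: hk; rewrite -subn1; lia.
Qed.

Lemma red_intro k w : 0 < k < size w -> blk k w -> reducible w.
Proof. move=> hk bk; rewrite red_blk; apply/hasP; exists k => //; rewrite ?hk // mem_iota; lia. Qed.
Lemma sred_intro k w : 0 < k < size w -> sblk k w -> sred w.
Proof. move=> hk bk; rewrite sred_sblk; apply/hasP; exists k => //; rewrite ?hk // mem_iota; lia. Qed.

Lemma red_sred w : reducible w -> sred w -> False.
Proof.
rewrite red_blk sred_sblk => /hasP [k _ /andP [hk bk]] /hasP [j _ /andP [hj bj]].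
exact: blk_sblk hk hj bk bj.
Qed.

Lemma sep_cases w : separable w ->
  [\/ w = [:: 1], reducible w /\ ~~ sred w | sred w /\ ~~ reducible w].
Proof.
case => [|p s Sp Ss|p s Sp Ss]; first by constructor 1.
- have [pp p0] := sep_perm Sp; have [ps s0] := sep_perm Ss.
  have r : reducible (dsum p s).
    apply: (red_intro (k := size p)); first by rewrite /dsum size_cat size_map; lia.
    exact: blk_dsum.
  constructor 2; split => //; apply/negP => /(red_sred r) //.
- have [pp p0] := sep_perm Sp; have [ps s0] := sep_perm Ss.
  have r : sred (dskew p s).
    apply: (sred_intro (k := size p)); first by rewrite /dskew size_cat size_map; lia.
    exact: sblk_dskew.
  constructor 3; split => //; apply/negP => /red_sred; by move/(_ r).
Qed.

Lemma blk_take j k w : j < k -> blk j w -> blk j (take k w).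
Proof.
move=> jk /allP b; rewrite /blk take_takel ?(ltnW jk) //; apply/allP => a at_.
move/allP: (b a at_) => H; apply/allP => y.
rewrite -(subnK (ltnW jk)) -take_drop => /mem_take; exact: H.
Qed.

Lemma blk_take_inv j k w : j < k -> blk k w -> blk j (take k w) -> blk j w.
Proof.
move=> jk bk bj; apply/allP => a aj.
have ak : a \in take k w by move: aj; rewrite -(take_takel w (ltnW jk)); apply: mem_take.
case: (leqP k (size w)) => ks; last first.
  move: bj; rewrite /blk take_takel ?(ltnW jk) // take_oversize ?(ltnW ks) // => /allP; exact.
rewrite -(cat_take_drop k w) drop_cat size_take.
have -> : (if k < size w then k else size w) = k by case: ltnP => // h; apply/eqP; rewrite eqn_leq ks h.
rewrite jk all_cat; apply/andP; split.
- move/allP: bj => /(_ a); rewrite take_takel ?(ltnW jk) //; exact.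
- by move/allP: bk => /(_ a ak).
Qed.

Lemma red_first w k : 0 < k < size w -> blk k w ->
  exists j, [/\ 0 < j <= k, blk j w & ~~ reducible (take j w)].
Proof.
elim: k {-2}k (leqnn k) => [|n IH] k kn hk bk; first by move: hk kn; lia.
case rt: (reducible (take k w)); last by exists k; split; [rewrite leqnn andbT; case/andP: hk | exact: bk | rewrite rt].
move: rt; rewrite red_blk => /hasP [j _ /andP [hj bj]].
have sk : size (take k w) = k by rewrite size_take; case/andP: hk => _ ->.
move: hj; rewrite sk => hj.
have bjw : blk j w by apply: (blk_take_inv (k := k)) => //; case/andP: hj => _ ->.
have jn : j <= n by move: hj kn; lia.
have hj' : 0 < j < size w by move: hj hk; lia.
have [i [hi bi ri]] := IH j jn hj' bjw.
by exists i; split => //; move: hi hj; lia.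
Qed.

Lemma red_first_uniq w j k : 0 < j -> 0 < k -> blk j w -> blk k w ->
  ~~ reducible (take j w) -> ~~ reducible (take k w) -> k <= size w -> j <= size w -> j = k.
Proof.
move=> j0 k0 bj bk rj rk ks js.
case: (ltngtP j k) => // h.
- exfalso; move/negP: rk; apply; apply: (red_intro (k := j)); last exact: blk_take.
  by rewrite size_take_min; move: h ks j0; lia.
- exfalso; move/negP: rj; apply; apply: (red_intro (k := k)); last exact: blk_take.
  by rewrite size_take_min; move: h js k0; lia.
Qed.

End Comb.

Local Open Scope ring_scope.


HB.instance Definition _ := gen_eqMixin (fps Rz).
HB.instance Definition _ := gen_choiceMixin (fps Rz).

Definition fzero : fps Rz := fun _ => 0.

Lemma faddA : associative (@fadd Rz).
Proof. by move=> f g h; apply/funext => n; rewrite /fadd addrA. Qed.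
Lemma faddC : commutative (@fadd Rz).
Proof. by move=> f g; apply/funext => n; rewrite /fadd addrC. Qed.
Lemma fadd0 : left_id fzero (@fadd Rz).
Proof. by move=> f; apply/funext => n; rewrite /fadd /fzero add0r. Qed.
Lemma faddN : left_inverse fzero (@fopp Rz) (@fadd Rz).
Proof. by move=> f; apply/funext => n; rewrite /fadd /fopp /fzero addNr. Qed.

HB.instance Definition _ := GRing.isZmodule.Build (fps Rz) faddA faddC fadd0 faddN.

Definition tr (n : nat) (f : fps Rz) : {poly Rz} := \poly_(i < n.+1) f i.

Lemma fmul_tr n m (f g : fps Rz) : (n <= m)%N -> fmul f g n = (tr m f * tr m g)`_n.
Proof.
move=> le; rewrite coefM /fmul; apply: eq_bigr => i _; rewrite !coef_poly.
have hi : (i < m.+1)%N by apply: leq_trans (ltn_ord i) _.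
have hj : (n - i < m.+1)%N by rewrite ltnS; apply: leq_trans (leq_subr _ _) le.
by rewrite hi hj.
Qed.

Lemma coef_tr n m (f : fps Rz) : (n <= m)%N -> (tr m f)`_n = f n.
Proof. by move=> le; rewrite coef_poly ltnS le. Qed.

Lemma fmulA : associative (@fmul Rz).
Proof.
move=> f g h; apply/funext => n.
have L : fmul f (fmul g h) n = (tr n f * (tr n g * tr n h))`_n.
  rewrite coefM /fmul; apply: eq_bigr => i _.
  rewrite (coef_tr f (ltn_ord i : (i <= n)%N)) -(fmul_tr _ _ (leq_subr _ _)) //.
have R : fmul (fmul f g) h n = (tr n f * tr n g * tr n h)`_n.
  rewrite coefM {1}/fmul; apply: eq_bigr => i _.
  rewrite (coef_tr h (leq_subr _ _)) -(fmul_tr _ _ (ltn_ord i : (i <= n)%N)) //.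
by rewrite L R mulrA.
Qed.

Lemma fmulC : commutative (@fmul Rz).
Proof.
move=> f g; apply/funext => n.
by rewrite (fmul_tr _ _ (leqnn n)) (fmul_tr _ _ (leqnn n)) mulrC.
Qed.

Lemma fmul1 : left_id (fone Rz) (@fmul Rz).
Proof.
move=> f; apply/funext => n; rewrite /fmul big_ord_recl /= /fone /fmono /= mul1r subn0.
rewrite big1 ?addr0 // => i _; by rewrite mul0r.
Qed.

Lemma fmulDl : left_distributive (@fmul Rz) (@fadd Rz).
Proof.
move=> f g h; apply/funext => n; rewrite /fmul /fadd -big_split /=.
by apply: eq_bigr => i _; rewrite mulrDl.
Qed.

Lemma fone_neq0 : fone Rz != fzero.
Proof.
apply/eqP => H; have := congr1 (fun f => f 0%N) H.
rewrite /fone /fmono /fzero /= => /eqP; by rewrite oner_eq0.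
Qed.

HB.instance Definition _ := GRing.Zmodule_isComNzRing.Build (fps Rz) fmulA fmulC fmul1 fmulDl fone_neq0.

Definition FS := fps Rz.

Lemma test (a b : fps Rz) : (a + b) * (a + b) = a * a + 2%:R * a * b + b * b.
Proof. ring. Qed.

Lemma addE (f g : fps Rz) : fadd f g = f + g. Proof. by []. Qed.
Lemma mulE (f g : fps Rz) : fmul f g = f * g. Proof. by []. Qed.
Lemma subE (f g : fps Rz) : fsub f g = f - g. Proof. by []. Qed.
Lemma oppE (f : fps Rz) : fopp f = - f. Proof. by []. Qed.
Lemma oneE : fone Rz = 1. Proof. by []. Qed.
Lemma zeroE : fzero = 0. Proof. by []. Qed.

Lemma size_finv_seq (f : fps Rz) n : size (finv_seq f n) = n.+1.
Proof. by elim: n => [|n IH] //=; rewrite size_rcons IH. Qed.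

Lemma nth_finv_seq (f : fps Rz) n i : (i <= n)%N -> nth 0 (finv_seq f n) i = Defs.finv f i.
Proof.
elim: n => [|n IH] le; first by move: le; rewrite leqn0 => /eqP ->.
rewrite /= nth_rcons size_finv_seq.
case: ltnP => [lt|ge]; first by rewrite IH.
have -> : i = n.+1 by apply/eqP; rewrite eqn_leq le ge.
by rewrite eqxx /Defs.finv /= nth_rcons size_finv_seq ltnn eqxx.
Qed.

Lemma finvS (f : fps Rz) m :
  Defs.finv f m.+1 = - (f 0%N)^-1 * \sum_(i < m.+1) f i.+1 * Defs.finv f (m - i)%N.
Proof.
rewrite {1}/Defs.finv /= nth_rcons size_finv_seq ltnn eqxx; congr (_ * _).
apply: eq_bigr => i _; rewrite nth_finv_seq //; exact: leq_subr.
Qed.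

Lemma fmulV (f : fps Rz) : f 0%N = 1 -> f * Defs.finv f = 1.
Proof.
move=> f0; apply/funext => n; case: n => [|m].
  by rewrite /= /GRing.mul /= /fmul big_ord1 /Defs.finv /= f0 invr1 mulr1.
rewrite /GRing.mul /= /fmul big_ord_recl /= finvS f0 invr1 mulN1r mul1r.
rewrite /fone /fmono /=.
under [X in _ + X]eq_bigr => i _ do rewrite /bump /= add1n subSS.
by rewrite addNr.
Qed.

Lemma fcoefD (f g : fps Rz) n : (f + g) n = f n + g n. Proof. by []. Qed.
Lemma fcoefN (f : fps Rz) n : (- f) n = - f n. Proof. by []. Qed.
Lemma fcoefB (f g : fps Rz) n : (f - g) n = f n - g n. Proof. by []. Qed.
Lemma fcoefM0 (f g : fps Rz) : (f * g) 0%N = f 0%N * g 0%N.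
Proof. by rewrite /GRing.mul /= /fmul big_ord1. Qed.
Lemma fcoef10 : (1 : fps Rz) 0%N = 1. Proof. by []. Qed.

Lemma fcancel (f x y : fps Rz) : f 0%N = 1 -> x * f = y * f -> x = y.
Proof.
move=> f0 e; rewrite -[x]mulr1 -[y]mulr1 -(fmulV f0) !mulrA e //.
Qed.

Lemma fdivP (f x y : fps Rz) : f 0%N = 1 -> x = y * f -> y = x * Defs.finv f.
Proof. by move=> f0 ->; rewrite -mulrA fmulV // mulr1. Qed.

Lemma fix0 (h k : fps Rz) : k 0%N = 0 -> h = h * k -> h = 0.
Proof.
move=> k0 e; apply/funext => n; elim: n {-2}n (leqnn n) => [|n IH] m.
  rewrite leqn0 => /eqP ->; by rewrite e fcoefM0 k0 mulr0.
move=> le; rewrite e /GRing.mul /= /fmul big_ord_recr /= subnn k0 mulr0 addr0.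
rewrite big1 // => i _.
have -> : h i = 0 by apply: IH; rewrite -ltnS; apply: leq_trans (ltn_ord i) le.
by rewrite mul0r.
Qed.

Definition cst (c : Rz) : fps Rz := fmono c 0.
Definition tt : fps Rz := fmono 1 1.

Lemma fmonoM c d i j : (fmono c i : fps Rz) * fmono d j = fmono (c * d) (i + j).
Proof.
apply/funext => n; rewrite /GRing.mul /= /fmul /fmono.
case: (leqP i n) => [le|lt].
- rewrite (bigD1 (Ordinal (le : (i < n.+1)%N))) //= big1 ?addr0.
    have E : ((n - i)%N == j) = (n == (i + j)%N) by rewrite -(eqn_add2l i) subnKC.
    by rewrite eqxx E; case: eqP => _; rewrite ?mulr0.
  move=> k /negbTE; rewrite -val_eqE /= => ->; by rewrite mul0r.
- have -> : (n == i + j) = false.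
    by apply/negbTE; rewrite neq_ltn (leq_trans lt (leq_addr _ _)).
  apply: big1 => k _; case: eqP => [ek|]; last by rewrite mul0r.
  exfalso; move: lt; rewrite -ek -ltnS => /(leq_trans (ltn_ord k)); by rewrite ltnn.
Qed.

Lemma fmonoD c d i : (fmono c i : fps Rz) + fmono d i = fmono (c + d) i.
Proof. apply/funext => n; rewrite fcoefD /fmono; case: eqP => //; by rewrite addr0. Qed.

Lemma fmonoE c k : (fmono c k : fps Rz) = cst c * tt ^+ k.
Proof.
elim: k => [|k IH]; first by rewrite expr0 mulr1.
by rewrite exprS mulrCA -IH /tt fmonoM mul1r.
Qed.

Lemma cstM a b : cst (a * b) = cst a * cst b.
Proof. by rewrite /cst fmonoM. Qed.
Lemma cst1 : cst 1 = 1. Proof. by []. Qed.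
Lemma cst0 c : cst c 0%N = c. Proof. by []. Qed.
Lemma tt0 : tt 0%N = 0. Proof. by []. Qed.


Definition Gf (P : pred (seq nat)) (f : seq nat -> Rz) : fps Rz :=
  fun n => \sum_(w <- PermL n | P w) f w.

Lemma sum_dsum (G : seq nat -> Rz) i m :
  \sum_(a <- PermL i) \sum_(b <- PermL m) G (dsum a b) = \sum_(w <- PermL (i + m) | blk i w) G w.
Proof.
have e : perm_eq [seq dsum p.1 p.2 | p <- [seq (a, b) | a <- PermL i, b <- PermL m]]
                 (filter (blk i) (PermL (i + m))).
  apply: uniq_perm.
  - rewrite map_inj_in_uniq.
      apply: allpairs_uniq; try exact: PermL_uniq.
      by move=> [a b] [c d] _ _ /= [-> ->].
    move=> [a b] [c d] /allpairsP [[x y] [/= xa yb [-> ->]]] /allpairsP [[x' y'] [/= xa' yb' [-> ->]]] /=.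
    move/dsum_inj; rewrite PermL_mem in xa; rewrite PermL_mem in xa'.
    by rewrite (isperm_size xa) (isperm_size xa') => /(_ erefl) [-> ->].
  - by rewrite filter_uniq // PermL_uniq.
  - move=> w; rewrite mem_filter; apply/mapP/andP.
    + move=> [[a b] /allpairsP [[x y] [/= xa yb [-> ->]]] ->] /=.
      rewrite PermL_mem in xa; rewrite PermL_mem in yb.
      have sx := isperm_size xa; have sy := isperm_size yb.
      split; first by rewrite -{1}sx; apply: blk_dsum; rewrite ?sx ?sy.
      rewrite PermL_mem -sx -sy; apply: isperm_dsum; by rewrite ?sx ?sy.
    + move=> [bw]; rewrite PermL_mem => pw.
      have [pt pp ew] := blk_parts pw (leq_addr m i) bw.
      exists (take i w, part2 i w) => //; apply/allpairsP; exists (take i w, part2 i w).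
      by rewrite !PermL_mem /= pt; split => //; rewrite addKn in pp.
transitivity (\sum_(w <- [seq x <- PermL (i + m) | blk i x]) G w); last by rewrite big_filter.
by rewrite -(perm_big _ e) big_map big_allpairs.
Qed.

Lemma sepb_nil : separableb [::] = false.
Proof. by apply/sepbP => /sep_perm []. Qed.

Lemma take_dsum a b : take (size a) (dsum a b) = a.
Proof. by rewrite /dsum take_size_cat. Qed.
Lemma part2_dsum a b : part2 (size a) (dsum a b) = b.
Proof.
rewrite /part2 /dsum drop_size_cat // -map_comp; transitivity (map id b); last by rewrite map_id.
by apply: eq_map => x /=; rewrite addnK.
Qed.

Lemma first_block_sum n w (c : Rz) : isperm n w ->
  \sum_(i < n.+1) (if [&& (0 < i < n)%N, blk i w, separableb w & ~~ reducible (take i w)] then c else 0)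
  = if separableb w && reducible w then c else 0.
Proof.
move=> pw; have sw := isperm_size pw.
case: (boolP (separableb w && reducible w)) => [/andP [sp rw]|nr].
- move: rw; rewrite red_blk => /hasP [k _ /andP [hk bk]].
  have [j [hj bj rj]] := red_first hk bk.
  have jn : (j < n.+1)%N by move: hj hk; rewrite sw; lia.
  rewrite (bigD1 (Ordinal jn)) //= big1.
    have -> : (0 < j < n)%N by move: hj hk; rewrite sw; lia.
    by rewrite bj sp rj addr0.
  move=> i ne; case: ifP => // /and4P [hi bi _ ri]; exfalso; move/negP: ne; apply.
  rewrite -val_eqE /=; apply/eqP; apply: (red_first_uniq _ _ bi bj ri rj); move: hi hj hk; rewrite sw; lia.
- apply: big1 => i _; case: ifP => // /and4P [hi bi sp ri]; exfalso; move/negP: nr; apply.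
  by rewrite sp /=; apply: (red_intro (k := i)); rewrite // sw.
Qed.

Lemma engine (F g h : seq nat -> Rz) :
  (forall a b, separable a -> separable b -> F (dsum a b) = g a * h b) ->
  Gf (fun w => separableb w && reducible w) F =
  Gf (fun w => separableb w && ~~ reducible w) g * Gf separableb h.
Proof.
move=> Hf; apply/funext => n.
rewrite /GRing.mul /= /fmul /Gf.
have T i : (i < n.+1)%N ->
  (\sum_(a <- PermL i | separableb a && ~~ reducible a) g a) * (\sum_(b <- PermL (n - i) | separableb b) h b)
  = \sum_(w <- PermL n) (if [&& (0 < i < n)%N, blk i w, separableb w & ~~ reducible (take i w)] then F w else 0).
  move=> iln; rewrite big_distrlr /=.
  case: (posnP i) => [->|i0].
    rewrite PermL0 big_cons big_nil sepb_nil /= big1 // => w _; by [].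
  case: (ltnP i n) => [lin|nli]; last first.
    have -> : (n - i = 0)%N by apply/eqP; rewrite subn_eq0.
    rewrite big1; last by move=> a _; rewrite PermL0 big_cons big_nil sepb_nil.
    by rewrite big1 // => w _; rewrite ltnNge nli andbF.
  pose G w := if [&& separableb (take i w), ~~ reducible (take i w) & separableb (part2 i w)] then F w else 0.
  transitivity (\sum_(a <- PermL i) \sum_(b <- PermL (n - i)) G (dsum a b)).
    rewrite big_mkcond /=; apply: eq_big_seq => a; rewrite PermL_mem => pa.
    have sa := isperm_size pa.
    rewrite big_mkcond /=; case Pa: (separableb a && ~~ reducible a).
      apply: eq_big_seq => b; rewrite PermL_mem => pb; rewrite /G -{1 2 3}sa take_dsum part2_dsum.
      case/andP: Pa => sa' ra; rewrite sa' ra /=; case sb: (separableb b) => //.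
      by rewrite Hf //; apply/sepbP.
    rewrite big1 // => b _; rewrite /G -{1 2}sa take_dsum.
    by move: Pa; case: (separableb a) => //= ->.
  rewrite sum_dsum subnKC ?(ltnW lin) // big_mkcond /=.
  apply: eq_big_seq => w; rewrite PermL_mem => pw.
  case bw: (blk i w) => //=; rewrite /G.
  have [pt pp ew] := blk_parts pw (ltnW lin) bw.
  have sw := isperm_size pw.
  case sp: (separableb w).
    have hw : (0 < i < size w)%N by rewrite sw i0 lin.
    have [s1 s2] := sep_blk (elimT (sepbP w) sp) hw bw.
    by rewrite (introT (sepbP _) s1) (introT (sepbP _) s2) andbT.
  case s1: (separableb (take i w)) => //=; case: (reducible (take i w)) => //=.
  case s2: (separableb (part2 i w)) => //; exfalso; move/negP: sp; apply; apply/sepbP.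
  rewrite ew; apply: sep_sum; exact/sepbP.
rewrite (eq_bigr (fun i : 'I_n.+1 => \sum_(w <- PermL n) (if [&& (0 < i < n)%N, blk i w, separableb w & ~~ reducible (take i w)] then F w else 0))); last first.
  move=> i _; exact: T (ltn_ord i).
rewrite exchange_big /= big_mkcond /=; apply: eq_big_seq => w; rewrite PermL_mem => pw.
by rewrite first_block_sum.
Qed.

Lemma comp_reindex n (P : pred (seq nat)) (F : seq nat -> Rz) :
  \sum_(w <- PermL n | P w) F w = \sum_(w <- PermL n | P (cmp w)) F (cmp w).
Proof.
have e : perm_eq (map cmp (PermL n)) (PermL n).
  apply: uniq_perm; last 2 first.
  - exact: PermL_uniq.
  - move=> w; apply/mapP/idP.
      by move=> [v]; rewrite !PermL_mem => pv ->; apply: comp_perm pv.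
    rewrite PermL_mem => pw; exists (cmp w); first by rewrite PermL_mem; apply: comp_perm pw.
    by rewrite (comp_invol pw).
  rewrite map_inj_in_uniq ?PermL_uniq // => v w; rewrite !PermL_mem => pv pw e.
  by rewrite -(comp_invol pv) e (comp_invol pw).
by rewrite -(perm_big _ e) big_map.
Qed.

Lemma eq_Gf (P Q : pred (seq nat)) (f g : seq nat -> Rz) :
  (forall n w, isperm n w -> P w = Q w) ->
  (forall n w, isperm n w -> P w -> f w = g w) -> Gf P f = Gf Q g.
Proof.
move=> HP Hf; apply/funext => n; rewrite /Gf big_mkcond [RHS]big_mkcond /=.
apply: eq_big_seq => w; rewrite PermL_mem => pw; rewrite -(HP _ _ pw).
by case Pw: (P w) => //; rewrite (Hf _ _ pw Pw).
Qed.

Lemma Gf_comp (P : pred (seq nat)) (f : seq nat -> Rz) :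
  Gf P f = Gf (fun w => P (cmp w)) (fun w => f (cmp w)).
Proof. by apply/funext => n; rewrite /Gf comp_reindex. Qed.

Lemma engine_skew (F g h : seq nat -> Rz) :
  (forall a b, separable a -> separable b -> F (dskew a b) = g a * h b) ->
  Gf (fun w => separableb w && sred w) F =
  Gf (fun w => separableb w && ~~ sred w) g * Gf separableb h.
Proof.
move=> Hf.
have sepc n w : isperm n w -> separableb (cmp w) = separableb w.
  move=> pw; have [h1 h2] := sep_compE pw; apply/sepbP/sepbP; [exact: h1 | exact: h2].
rewrite Gf_comp [Gf _ g]Gf_comp [Gf _ h]Gf_comp.
rewrite (@eq_Gf _ (fun w => separableb w && reducible w) _ (fun w => F (cmp w))); last 2 first.
- by move=> n w pw; rewrite (sepc _ _ pw) (sred_comp pw).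
- by [].
rewrite (@eq_Gf _ (fun w => separableb w && ~~ reducible w) (fun w => g (cmp w)) (fun w => g (cmp w))); last 2 first.
- by move=> n w pw; rewrite (sepc _ _ pw) (sred_comp pw).
- by [].
rewrite (@eq_Gf _ separableb (fun w => h (cmp w)) (fun w => h (cmp w))); last 2 first.
- by move=> n w pw; rewrite (sepc _ _ pw).
- by [].
apply: engine => a b sa sb.
have [pa _] := sep_perm sa; have [pb _] := sep_perm sb.
rewrite comp_dsum // Hf //; exact: sep_comp.
Qed.

Definition onep (w : seq nat) : bool := w == [:: 1%N].

Lemma Gf_one (f : seq nat -> Rz) : Gf onep f = fmono (f [:: 1%N]) 1.
Proof.
apply/funext => n; rewrite /Gf /fmono; case: eqP => [->|ne].
  by rewrite PermL1 big_cons big_nil /onep eqxx addr0.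
apply: big1_seq => w /andP [/eqP -> ]; rewrite PermL_mem => /isperm_size /= e.
by exfalso; apply: ne.
Qed.

Lemma Gf_split (P Q R : pred (seq nat)) (f : seq nat -> Rz) :
  (forall n w, isperm n w -> R w = P w || Q w) ->
  (forall n w, isperm n w -> P w -> Q w -> False) ->
  Gf R f = Gf P f + Gf Q f.
Proof.
move=> HR HPQ; apply/funext => n; rewrite fcoefD /Gf big_mkcond [\sum_(w <- _ | P w) _]big_mkcond [\sum_(w <- _ | Q w) _]big_mkcond -big_split /=.
apply: eq_big_seq => w; rewrite PermL_mem => pw; rewrite (HR _ _ pw).
case Pw: (P w); case Qw: (Q w) => //=; rewrite ?addr0 ?add0r //.
by exfalso; apply: (HPQ _ _ pw Pw Qw).
Qed.

Lemma one_sep w : onep w -> separableb w.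
Proof. by move/eqP => ->; apply/sepbP; exact: sep_one. Qed.

Lemma class_facts w : separableb w ->
  onep w = ~~ reducible w && ~~ sred w /\ ~~ (reducible w && sred w).
Proof.
move=> /sepbP sw; case: (sep_cases sw) => [->|[r s]|[s r]]; first by [].
- have o : onep w = false by apply/eqP => e; move: (red_size r); rewrite e.
  by rewrite o r (negbTE s).
- have o : onep w = false by apply/eqP => e; move: (sred_size s); rewrite e.
  by rewrite o s (negbTE r).
Qed.

Lemma classify_bool w :
  ((separableb w = [|| onep w, separableb w && reducible w | separableb w && sred w]) *
      (~~ (onep w && (separableb w && reducible w))) *
      (~~ (onep w && (separableb w && sred w))) *
      (~~ ((onep w || separableb w && reducible w) && (separableb w && sred w))) *
      (separableb w && ~~ reducible w = onep w || separableb w && sred w) *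
      (separableb w && ~~ sred w = onep w || separableb w && reducible w))%type.
Proof.
case: (boolP (separableb w)) => [sw|ns].
  have [e1 e2] := class_facts sw; rewrite e1; move: e2.
  by case: (reducible w); case: (sred w).
by rewrite (negbTE (contra (@one_sep w) ns)).
Qed.

Lemma Gf_all (f : seq nat -> Rz) : Gf separableb f =
  Gf onep f + Gf (fun w => separableb w && reducible w) f + Gf (fun w => separableb w && sred w) f.
Proof.
rewrite -(@Gf_split onep (fun w => separableb w && reducible w) (fun w => onep w || (separableb w && reducible w))).
- apply: Gf_split => n w pw; have [[[[[e1 _] _] e4] _] _] := classify_bool w.
    by rewrite -orbA; exact: e1.
  by move=> h1 h2; move: e4; rewrite h1 h2.
- by [].
- by move=> n w pw h1 h2; have [[[[[_ e2] _] _] _] _] := classify_bool w; move: e2; rewrite h1 h2.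
Qed.

Lemma Gf_ired (f : seq nat -> Rz) : Gf (fun w => separableb w && ~~ reducible w) f =
  Gf onep f + Gf (fun w => separableb w && sred w) f.
Proof.
apply: Gf_split => n w pw; have [[[[[_ _] e3] _] e5] _] := classify_bool w => //.
by move=> h1 h2; move: e3; rewrite h1 h2.
Qed.

Lemma Gf_isred (f : seq nat -> Rz) : Gf (fun w => separableb w && ~~ sred w) f =
  Gf onep f + Gf (fun w => separableb w && reducible w) f.
Proof.
apply: Gf_split => n w pw; have [[[[[_ e2] _] _] _] e6] := classify_bool w => //.
by move=> h1 h2; move: e2; rewrite h1 h2.
Qed.

Lemma Gf0 (P : pred (seq nat)) f : (forall w, P w -> separableb w) -> Gf P f 0%N = 0.
Proof.
move=> H; rewrite /Gf PermL0 big_cons big_nil.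
by case: ifP => // /H; rewrite sepb_nil.
Qed.
Lemma word_inj n : injective (@word n).
Proof.
move=> p q e; apply/permP => i; apply/val_inj; apply/succn_inj.
have := congr1 (fun s => nth 0%N s i) e.
by rewrite /word !(nth_map i) -?enumT ?size_enum_ord ?nth_ord_enum //.
Qed.

Lemma word_perm n (p : 'S_n) : isperm n (word p).
Proof.
rewrite ispermP /word; apply/and3P; split.
- rewrite map_inj_uniq ?enum_uniq // => i j /succn_inj /val_inj; exact: perm_inj.
- by rewrite size_map size_enum_ord.
- by apply/allP => x /mapP [i _ ->]; rewrite ltn_ord.
Qed.

Lemma perm_word n w : isperm n w -> exists p : 'S_n, word p = w.
Proof.
case: n => [|n] pw; have sw := isperm_size pw; have uw := isperm_uniq pw.
  exists 1%g; have : size (word (1%g : 'S_0)) = 0%N by rewrite size_map size_enum_ord.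
  by move/size0nil => ->; move/size0nil: sw => ->.
pose f (i : 'I_n.+1) : 'I_n.+1 := inord (nth 0%N w i).-1.
have bnd (i : 'I_n.+1) : (0 < nth 0%N w i <= n.+1)%N.
  by apply: (isperm_mem pw); apply: mem_nth; rewrite sw.
have fE (i : 'I_n.+1) : (f i).+1 = nth 0%N w i.
  rewrite /f inordK; first by have := bnd i; case: (nth _ _ _).
  by have := bnd i; case: (nth _ _ _) => //= m; rewrite ltnS.
have finj : injective f.
  move=> i j e; apply/val_inj; apply/eqP.
  rewrite -(nth_uniq 0%N _ _ uw) ?sw ?ltn_ord //; apply/eqP.
  by rewrite -fE -fE e.
exists (@perm _ f finj); apply: (@eq_from_nth _ 0%N); first by rewrite /word size_map size_enum_ord sw.
move=> i; rewrite /word size_map size_enum_ord => ilt.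
rewrite (nth_map (Ordinal ilt)) ?size_enum_ord // permE.
have -> : nth (Ordinal ilt) (enum 'I_n.+1) i = Ordinal ilt.
  by apply/val_inj; rewrite /= nth_enum_ord.
by rewrite fE.
Qed.

Lemma word_sum n (P : pred (seq nat)) (F : seq nat -> Rz) :
  \sum_(p : 'S_n | P (word p)) F (word p) = \sum_(w <- PermL n | P w) F w.
Proof.
have e : perm_eq [seq word p | p in 'S_n] (PermL n).
  apply: uniq_perm; first by rewrite map_inj_uniq ?enum_uniq //; exact: word_inj.
    exact: PermL_uniq.
  move=> w; rewrite PermL_mem; apply/mapP/idP.
    by move=> [p _ ->]; apply: word_perm.
  by move=> /perm_word [p <-]; exists p; rewrite ?mem_enum.
rewrite -(perm_big _ e) big_image_cond; apply: eq_bigl => p; by rewrite inE.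
Qed.


Lemma stats_dsum a b : separable a -> separable b ->
  [/\ lmax (dsum a b) = (lmax a + lmax b)%N, lmin (dsum a b) = lmin a,
      rmax (dsum a b) = rmax b & rmin (dsum a b) = (rmin a + rmin b)%N].
Proof.
move=> sa sb; have [pa a0] := sep_perm sa; have [pb b0] := sep_perm sb.
by split; [apply: lmax_dsum | apply: lmin_dsum | apply: rmax_dsum | apply: rmin_dsum].
Qed.

Lemma stats_dskew a b : separable a -> separable b ->
  [/\ lmax (dskew a b) = lmax a, lmin (dskew a b) = (lmin a + lmin b)%N,
      rmax (dskew a b) = (rmax a + rmax b)%N & rmin (dskew a b) = rmin b].
Proof.
move=> sa sb; have [pa a0] := sep_perm sa; have [pb b0] := sep_perm sb.
by split; [apply: lmax_dskew | apply: lmin_dskew | apply: rmax_dskew | apply: rmin_dskew].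
Qed.

Definition Uu f := Gf separableb f.
Definition Pp f := Gf (fun w => separableb w && reducible w) f.
Definition Mm f := Gf (fun w => separableb w && sred w) f.
Definition Oo (f : seq nat -> Rz) : fps Rz := cst (f [:: 1%N]) * tt.

Lemma Oo_E f : Gf onep f = Oo f.
Proof. by rewrite Gf_one fmonoE expr1. Qed.

Lemma U_eq f : Uu f = Oo f + Pp f + Mm f.
Proof. by rewrite /Uu Gf_all Oo_E. Qed.

Lemma P_eq F g h : (forall a b, separable a -> separable b -> F (dsum a b) = g a * h b) ->
  Pp F = (Oo g + Mm g) * Uu h.
Proof. by move=> H; rewrite /Pp (engine H) Gf_ired Oo_E. Qed.

Lemma M_eq F g h : (forall a b, separable a -> separable b -> F (dskew a b) = g a * h b) ->
  Mm F = (Oo g + Pp g) * Uu h.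
Proof. by move=> H; rewrite /Mm (engine_skew H) Gf_isred Oo_E. Qed.

Lemma U0 f : Uu f 0%N = 0. Proof. by apply: Gf0. Qed.
Lemma P0 f : Pp f 0%N = 0. Proof. by apply: Gf0 => w /andP []. Qed.
Lemma M0 f : Mm f 0%N = 0. Proof. by apply: Gf0 => w /andP []. Qed.
Lemma O0 f : Oo f 0%N = 0. Proof. by rewrite /Oo fcoefM0 tt0 mulr0. Qed.

Definition W0 : seq nat -> Rz := fun _ => 1.
Definition Wa (z : Rz) : seq nat -> Rz := fun w => z ^+ lmax w.
Definition Wb (z : Rz) : seq nat -> Rz := fun w => z ^+ rmax w.
Definition Wc (z : Rz) : seq nat -> Rz := fun w => z ^+ lmin w.
Definition Wd (z : Rz) : seq nat -> Rz := fun w => z ^+ rmin w.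
Definition Wac : seq nat -> Rz := fun w => z1 ^+ lmax w * z3 ^+ lmin w.
Definition Wab : seq nat -> Rz := fun w => z1 ^+ lmax w * z2 ^+ rmax w.
Definition Wbc : seq nat -> Rz := fun w => z2 ^+ rmax w * z3 ^+ lmin w.
Definition Wdc : seq nat -> Rz := fun w => z1 ^+ rmin w * z3 ^+ lmin w.
Definition Wdb : seq nat -> Rz := fun w => z1 ^+ rmin w * z2 ^+ rmax w.
Definition T1 : seq nat -> Rz := fun w => z1 ^+ lmax w * z2 ^+ rmax w * z3 ^+ lmin w.
Definition T2 : seq nat -> Rz := fun w => z1 ^+ rmin w * z2 ^+ rmax w * z3 ^+ lmin w.

Lemma lmaxS a b : separable a -> separable b -> lmax (dsum a b) = (lmax a + lmax b)%N.
Proof. by move=> sa sb; case: (stats_dsum sa sb). Qed.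
Lemma lminS a b : separable a -> separable b -> lmin (dsum a b) = lmin a.
Proof. by move=> sa sb; case: (stats_dsum sa sb). Qed.
Lemma rmaxS a b : separable a -> separable b -> rmax (dsum a b) = rmax b.
Proof. by move=> sa sb; case: (stats_dsum sa sb). Qed.
Lemma rminS a b : separable a -> separable b -> rmin (dsum a b) = (rmin a + rmin b)%N.
Proof. by move=> sa sb; case: (stats_dsum sa sb). Qed.
Lemma lmaxK a b : separable a -> separable b -> lmax (dskew a b) = lmax a.
Proof. by move=> sa sb; case: (stats_dskew sa sb). Qed.
Lemma lminK a b : separable a -> separable b -> lmin (dskew a b) = (lmin a + lmin b)%N.
Proof. by move=> sa sb; case: (stats_dskew sa sb). Qed.
Lemma rmaxK a b : separable a -> separable b -> rmax (dskew a b) = (rmax a + rmax b)%N.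
Proof. by move=> sa sb; case: (stats_dskew sa sb). Qed.
Lemma rminK a b : separable a -> separable b -> rmin (dskew a b) = rmin b.
Proof. by move=> sa sb; case: (stats_dskew sa sb). Qed.

Ltac fact_dsum := move=> ? ? ? ?;
  rewrite /W0 /Wa /Wb /Wc /Wd /Wac /Wab /Wbc /Wdc /Wdb /T1 /T2 ?lmaxS ?lminS ?rmaxS ?rminS // ?exprD; ring.
Ltac fact_dskew := move=> ? ? ? ?;
  rewrite /W0 /Wa /Wb /Wc /Wd /Wac /Wab /Wbc /Wdc /Wdb /T1 /T2 ?lmaxK ?lminK ?rmaxK ?rminK // ?exprD; ring.

Lemma P_W0 : Pp W0 = (Oo W0 + Mm W0) * Uu W0. Proof. apply: P_eq; fact_dsum. Qed.
Lemma M_W0 : Mm W0 = (Oo W0 + Pp W0) * Uu W0. Proof. apply: M_eq; fact_dskew. Qed.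
Lemma P_Wa z : Pp (Wa z) = (Oo (Wa z) + Mm (Wa z)) * Uu (Wa z). Proof. apply: P_eq; fact_dsum. Qed.
Lemma M_Wa z : Mm (Wa z) = (Oo (Wa z) + Pp (Wa z)) * Uu W0. Proof. apply: M_eq; fact_dskew. Qed.
Lemma P_Wb z : Pp (Wb z) = (Oo W0 + Mm W0) * Uu (Wb z). Proof. apply: P_eq; fact_dsum. Qed.
Lemma M_Wb z : Mm (Wb z) = (Oo (Wb z) + Pp (Wb z)) * Uu (Wb z). Proof. apply: M_eq; fact_dskew. Qed.
Lemma P_Wc z : Pp (Wc z) = (Oo (Wc z) + Mm (Wc z)) * Uu W0. Proof. apply: P_eq; fact_dsum. Qed.
Lemma M_Wc z : Mm (Wc z) = (Oo (Wc z) + Pp (Wc z)) * Uu (Wc z). Proof. apply: M_eq; fact_dskew. Qed.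
Lemma P_Wd z : Pp (Wd z) = (Oo (Wd z) + Mm (Wd z)) * Uu (Wd z). Proof. apply: P_eq; fact_dsum. Qed.
Lemma M_Wd z : Mm (Wd z) = (Oo W0 + Pp W0) * Uu (Wd z). Proof. apply: M_eq; fact_dskew. Qed.
Lemma P_Wac : Pp Wac = (Oo Wac + Mm Wac) * Uu (Wa z1). Proof. apply: P_eq; fact_dsum. Qed.
Lemma M_Wac : Mm Wac = (Oo Wac + Pp Wac) * Uu (Wc z3). Proof. apply: M_eq; fact_dskew. Qed.
Lemma P_Wab : Pp Wab = (Oo (Wa z1) + Mm (Wa z1)) * Uu Wab. Proof. apply: P_eq; fact_dsum. Qed.
Lemma M_Wab : Mm Wab = (Oo Wab + Pp Wab) * Uu (Wb z2). Proof. apply: M_eq; fact_dskew. Qed.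
Lemma P_Wbc : Pp Wbc = (Oo (Wc z3) + Mm (Wc z3)) * Uu (Wb z2). Proof. apply: P_eq; fact_dsum. Qed.
Lemma M_Wbc : Mm Wbc = (Oo Wbc + Pp Wbc) * Uu Wbc. Proof. apply: M_eq; fact_dskew. Qed.
Lemma P_Wdc : Pp Wdc = (Oo Wdc + Mm Wdc) * Uu (Wd z1). Proof. apply: P_eq; fact_dsum. Qed.
Lemma M_Wdc : Mm Wdc = (Oo (Wc z3) + Pp (Wc z3)) * Uu Wdc. Proof. apply: M_eq; fact_dskew. Qed.
Lemma P_Wdb : Pp Wdb = (Oo (Wd z1) + Mm (Wd z1)) * Uu Wdb. Proof. apply: P_eq; fact_dsum. Qed.
Lemma M_Wdb : Mm Wdb = (Oo (Wb z2) + Pp (Wb z2)) * Uu Wdb. Proof. apply: M_eq; fact_dskew. Qed.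
Lemma P_T1 : Pp T1 = (Oo Wac + Mm Wac) * Uu Wab. Proof. apply: P_eq; fact_dsum. Qed.
Lemma M_T1 : Mm T1 = (Oo T1 + Pp T1) * Uu Wbc. Proof. apply: M_eq; fact_dskew. Qed.
Lemma P_T2 : Pp T2 = (Oo Wdc + Mm Wdc) * Uu Wdb. Proof. apply: P_eq; fact_dsum. Qed.
Lemma M_T2 : Mm T2 = (Oo Wbc + Pp Wbc) * Uu T2. Proof. apply: M_eq; fact_dskew. Qed.

Lemma O_W0 : Oo W0 = tt. Proof. by rewrite /Oo /W0 cst1 mul1r. Qed.
Lemma O_Wa z : Oo (Wa z) = cst z * tt. Proof. by rewrite /Oo /Wa expr1. Qed.
Lemma O_Wb z : Oo (Wb z) = cst z * tt. Proof. by rewrite /Oo /Wb expr1. Qed.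
Lemma O_Wc z : Oo (Wc z) = cst z * tt. Proof. by rewrite /Oo /Wc expr1. Qed.
Lemma O_Wd z : Oo (Wd z) = cst z * tt. Proof. by rewrite /Oo /Wd expr1. Qed.
Lemma O_Wac : Oo Wac = cst z1 * cst z3 * tt. Proof. by rewrite /Oo /Wac !expr1 cstM. Qed.
Lemma O_Wab : Oo Wab = cst z1 * cst z2 * tt. Proof. by rewrite /Oo /Wab !expr1 cstM. Qed.
Lemma O_Wbc : Oo Wbc = cst z2 * cst z3 * tt. Proof. by rewrite /Oo /Wbc !expr1 cstM. Qed.
Lemma O_Wdc : Oo Wdc = cst z1 * cst z3 * tt. Proof. by rewrite /Oo /Wdc !expr1 cstM. Qed.
Lemma O_Wdb : Oo Wdb = cst z1 * cst z2 * tt. Proof. by rewrite /Oo /Wdb !expr1 cstM. Qed.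
Lemma O_T1 : Oo T1 = cst z1 * cst z2 * cst z3 * tt. Proof. by rewrite /Oo /T1 !expr1 !cstM. Qed.
Lemma O_T2 : Oo T2 = cst z1 * cst z2 * cst z3 * tt. Proof. by rewrite /Oo /T2 !expr1 !cstM. Qed.


Lemma eq0 (x y : fps Rz) : x = y -> x - y = 0.
Proof. by move=> ->; rewrite subrr. Qed.

Ltac lcomb e := apply/eqP; rewrite -subr_eq0; apply/eqP; transitivity e; [ring | ].

Lemma cancel1 (c x y : fps Rz) : c 0%N = 0 -> x * (1 + c) = y * (1 + c) -> x = y.
Proof. move=> c0; apply: fcancel; by rewrite fcoefD fcoef10 c0 addr0. Qed.

Lemma fix_uniq (a v X Y : fps Rz) : a 0%N = 0 -> v 0%N = 0 ->
  X = (a + v * X) * (1 + X) -> Y = (a + v * Y) * (1 + Y) -> X = Y.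
Proof.
move=> a0 v0 hX hY; apply/eqP; rewrite -subr_eq0; apply/eqP.
apply: (@fix0 _ (a + v + v * X + v * Y)).
  by rewrite !fcoefD !fcoefM0 a0 v0 !mul0r !addr0.
lcomb ((X - (a + v * X) * (1 + X)) - (Y - (a + v * Y) * (1 + Y))).
rewrite (eq0 hX) (eq0 hY); ring.
Qed.

Definition CC := Uu W0.
Definition vv := tt + Mm W0.

Lemma hC : CC = tt + Pp W0 + Mm W0. Proof. by rewrite /CC U_eq O_W0. Qed.
Lemma hP0 : Pp W0 = (tt + Mm W0) * CC. Proof. by rewrite P_W0 O_W0. Qed.
Lemma hM0 : Mm W0 = (tt + Pp W0) * CC. Proof. by rewrite M_W0 O_W0. Qed.

Lemma CC0 : CC 0%N = 0. Proof. exact: U0. Qed.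
Lemma vv0 : vv 0%N = 0. Proof. by rewrite /vv fcoefD tt0 M0 addr0. Qed.

Lemma PM0 : Pp W0 = Mm W0.
Proof.
apply/eqP; rewrite -subr_eq0; apply/eqP; apply: (@cancel1 CC); first exact: CC0.
rewrite mul0r; lcomb ((Pp W0 - (tt + Mm W0) * CC) - (Mm W0 - (tt + Pp W0) * CC)).
rewrite (eq0 hP0) (eq0 hM0); ring.
Qed.

Lemma hv : vv * (1 + CC) = CC.
Proof.
rewrite /vv; lcomb (- (Pp W0 - (tt + Mm W0) * CC) - (CC - (tt + Pp W0 + Mm W0))).
rewrite (eq0 hP0) (eq0 hC); ring.
Qed.

Section Uni.
Variable z : Rz.
Let a := cst z * tt.
Lemma a0 : a 0%N = 0. Proof. by rewrite /a fcoefM0 tt0 mulr0. Qed.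

Definition SS := Uu (Wb z).

Lemma S_fix : SS = (a + vv * SS) * (1 + SS).
Proof.
have hS : SS = a + Pp (Wb z) + Mm (Wb z) by rewrite /SS U_eq O_Wb.
have hP : Pp (Wb z) = vv * SS by rewrite P_Wb O_W0.
have hM : Mm (Wb z) = (a + Pp (Wb z)) * SS by rewrite M_Wb O_Wb.
lcomb ((SS - (a + Pp (Wb z) + Mm (Wb z))) + (1 + SS) * (Pp (Wb z) - vv * SS)
       + (Mm (Wb z) - (a + Pp (Wb z)) * SS)).
rewrite (eq0 hS) (eq0 hP) (eq0 hM); ring.
Qed.

Lemma Db : (a + Pp (Wb z)) * (1 + SS) = SS.
Proof.
have hS : SS = a + Pp (Wb z) + Mm (Wb z) by rewrite /SS U_eq O_Wb.
have hM : Mm (Wb z) = (a + Pp (Wb z)) * SS by rewrite M_Wb O_Wb.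
lcomb (- (SS - (a + Pp (Wb z) + Mm (Wb z))) - (Mm (Wb z) - (a + Pp (Wb z)) * SS)).
rewrite (eq0 hS) (eq0 hM); ring.
Qed.

Lemma Ua_S : Uu (Wa z) = SS.
Proof.
set U := Uu (Wa z); set P := Pp (Wa z); set M := Mm (Wa z).
have hU : U = a + P + M by rewrite /U U_eq O_Wa.
have hP : P = (a + M) * U by rewrite /P P_Wa O_Wa.
have hM : M = (a + P) * CC by rewrite /M M_Wa O_Wa.
have hMv : M = vv * U.
  apply/eqP; rewrite -subr_eq0; apply/eqP; apply: (@cancel1 CC); first exact: CC0.
  rewrite mul0r; lcomb ((M - (a + P) * CC) - CC * (U - (a + P + M)) - U * (vv * (1 + CC) - CC)).
  rewrite (eq0 hM) (eq0 hU) (eq0 hv); ring.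
apply: (fix_uniq a0 vv0 _ S_fix).
lcomb ((U - (a + P + M)) + (P - (a + M) * U) + (1 + U) * (M - vv * U)).
rewrite (eq0 hU) (eq0 hP) (eq0 hMv); ring.
Qed.

Lemma Da : (a + Mm (Wa z)) * (1 + SS) = SS.
Proof.
rewrite -Ua_S; set U := Uu (Wa z); set P := Pp (Wa z); set M := Mm (Wa z).
have hU : U = a + P + M by rewrite /U U_eq O_Wa.
have hP : P = (a + M) * U by rewrite /P P_Wa O_Wa.
lcomb (- (U - (a + P + M)) - (P - (a + M) * U)).
rewrite (eq0 hU) (eq0 hP); ring.
Qed.

Lemma Uc_S : Uu (Wc z) = SS.
Proof.
set U := Uu (Wc z); set P := Pp (Wc z); set M := Mm (Wc z).
have hU : U = a + P + M by rewrite /U U_eq O_Wc.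
have hP : P = (a + M) * CC by rewrite /P P_Wc O_Wc.
have hM : M = (a + P) * U by rewrite /M M_Wc O_Wc.
have hPv : P = vv * U.
  apply/eqP; rewrite -subr_eq0; apply/eqP; apply: (@cancel1 CC); first exact: CC0.
  rewrite mul0r; lcomb ((P - (a + M) * CC) - CC * (U - (a + P + M)) - U * (vv * (1 + CC) - CC)).
  rewrite (eq0 hP) (eq0 hU) (eq0 hv); ring.
apply: (fix_uniq a0 vv0 _ S_fix).
lcomb ((U - (a + P + M)) + (M - (a + P) * U) + (1 + U) * (P - vv * U)).
rewrite (eq0 hU) (eq0 hM) (eq0 hPv); ring.
Qed.

Lemma Dc : (a + Pp (Wc z)) * (1 + SS) = SS.
Proof.
rewrite -Uc_S; set U := Uu (Wc z); set P := Pp (Wc z); set M := Mm (Wc z).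
have hU : U = a + P + M by rewrite /U U_eq O_Wc.
have hM : M = (a + P) * U by rewrite /M M_Wc O_Wc.
lcomb (- (U - (a + P + M)) - (M - (a + P) * U)).
rewrite (eq0 hU) (eq0 hM); ring.
Qed.

Lemma Dc2 : Mm (Wc z) * (1 + SS) = SS * SS.
Proof.
rewrite -Uc_S; set U := Uu (Wc z); set P := Pp (Wc z); set M := Mm (Wc z).
have hU : U = a + P + M by rewrite /U U_eq O_Wc.
have hM : M = (a + P) * U by rewrite /M M_Wc O_Wc.
lcomb ((M - (a + P) * U) - U * (U - (a + P + M))).
rewrite (eq0 hU) (eq0 hM); ring.
Qed.

Lemma Ud_S : Uu (Wd z) = SS.
Proof.
set U := Uu (Wd z); set P := Pp (Wd z); set M := Mm (Wd z).
have hU : U = a + P + M by rewrite /U U_eq O_Wd.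
have hP : P = (a + M) * U by rewrite /P P_Wd O_Wd.
have hM : M = (tt + Pp W0) * U by rewrite /M M_Wd O_W0.
have hMv : M = vv * U.
  rewrite /vv; lcomb ((M - (tt + Pp W0) * U) + U * (Pp W0 - Mm W0)).
  rewrite (eq0 hM) (eq0 PM0); ring.
apply: (fix_uniq a0 vv0 _ S_fix).
lcomb ((U - (a + P + M)) + (P - (a + M) * U) + (1 + U) * (M - vv * U)).
rewrite (eq0 hU) (eq0 hP) (eq0 hMv); ring.
Qed.

Lemma Dd : (a + Mm (Wd z)) * (1 + SS) = SS.
Proof.
rewrite -Ud_S; set U := Uu (Wd z); set P := Pp (Wd z); set M := Mm (Wd z).
have hU : U = a + P + M by rewrite /U U_eq O_Wd.
have hP : P = (a + M) * U by rewrite /P P_Wd O_Wd.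
lcomb (- (U - (a + P + M)) - (P - (a + M) * U)).
rewrite (eq0 hU) (eq0 hP); ring.
Qed.

Lemma SS0 : SS 0%N = 0. Proof. exact: U0. Qed.
End Uni.

Notation s1 := (SS z1).
Notation s2 := (SS z2).
Notation s3 := (SS z3).

Lemma Iac_eq : (Oo Wac + Mm Wac) * (1 - s1 * s3) = Oo Wac * (1 + s3).
Proof.
have hP : Pp Wac = (Oo Wac + Mm Wac) * s1 by rewrite P_Wac Ua_S.
have hM : Mm Wac = (Oo Wac + Pp Wac) * s3 by rewrite M_Wac Uc_S.
lcomb ((Mm Wac - (Oo Wac + Pp Wac) * s3) + s3 * (Pp Wac - (Oo Wac + Mm Wac) * s1)).
rewrite (eq0 hP) (eq0 hM); ring.
Qed.

Lemma Uab_eq : Uu Wab * (1 - s1 * s2) = Oo Wab * (1 + s1) * (1 + s2).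
Proof.
set U := Uu Wab; set P := Pp Wab; set M := Mm Wab; set o := Oo Wab.
set q := Oo (Wa z1) + Mm (Wa z1).
have hU : U = o + P + M by rewrite /U U_eq.
have hP : P = q * U by rewrite /P P_Wab.
have hM : M = (o + P) * s2 by rewrite /M M_Wab.
have hD : q * (1 + s1) = s1 by rewrite /q O_Wa Da.
lcomb ((1 + s1) * ((U - (o + P + M)) + (M - (o + P) * s2)) + (1 + s1) * (1 + s2) * (P - q * U)
       + (1 + s2) * U * (q * (1 + s1) - s1)).
rewrite (eq0 hU) (eq0 hM) (eq0 hP) (eq0 hD); ring.
Qed.

Definition Bq := Pp Wbc + Oo Wbc.

Lemma Ubc_eq : (1 + Uu Wbc) * (1 - Bq) = 1.
Proof.
rewrite /Bq; set U := Uu Wbc; set P := Pp Wbc; set M := Mm Wbc; set o := Oo Wbc.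
have hU : U = o + P + M by rewrite /U U_eq.
have hM : M = (o + P) * U by rewrite /M M_Wbc.
lcomb ((U - (o + P + M)) + (M - (o + P) * U)).
rewrite (eq0 hU) (eq0 hM); ring.
Qed.

Lemma Idc_eq : (Oo Wdc + Mm Wdc) * (1 - s1 * s3) = Oo Wdc * (1 + s3).
Proof.
set U := Uu Wdc; set P := Pp Wdc; set M := Mm Wdc; set o := Oo Wdc.
set r := Oo (Wc z3) + Pp (Wc z3).
have hU : U = o + P + M by rewrite /U U_eq.
have hP : P = (o + M) * s1 by rewrite /P P_Wdc Ud_S.
have hM : M = r * U by rewrite /M M_Wdc.
have hD : r * (1 + s3) = s3 by rewrite /r O_Wc Dc.
lcomb ((1 + s3) * (M - r * U) + U * (r * (1 + s3) - s3)
       + s3 * ((U - (o + P + M)) + (P - (o + M) * s1))).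
rewrite (eq0 hU) (eq0 hM) (eq0 hP) (eq0 hD); ring.
Qed.

Lemma Udb_eq : Uu Wdb * (1 - s1 * s2) = Oo Wdb * (1 + s1) * (1 + s2).
Proof.
set U := Uu Wdb; set P := Pp Wdb; set M := Mm Wdb; set o := Oo Wdb.
set q := Oo (Wd z1) + Mm (Wd z1).
set r := Oo (Wb z2) + Pp (Wb z2).
have hU : U = o + P + M by rewrite /U U_eq.
have hP : P = q * U by rewrite /P P_Wdb.
have hM : M = r * U by rewrite /M M_Wdb.
have hq : q * (1 + s1) = s1 by rewrite /q O_Wd Dd.
have hr : r * (1 + s2) = s2 by rewrite /r O_Wb Db.
lcomb ((1 + s1) * (1 + s2) * ((U - (o + P + M)) + (P - q * U) + (M - r * U))
       + (1 + s2) * U * (q * (1 + s1) - s1) + (1 + s1) * U * (r * (1 + s2) - s2)).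
rewrite (eq0 hU) (eq0 hM) (eq0 hP) (eq0 hq) (eq0 hr); ring.
Qed.

Definition Ntz : fps Rz := fmono (z1 ^+ 2 * z2 * z3) 2.
Definition Dn : fps Rz := (1 - s1 * s3) * (1 - s1 * s2).
Definition Nn : fps Rz := (s1 + 1) * (s2 + 1) * (s3 + 1) * Ntz.
Definition Ee : fps Rz := Oo T1 + Nn * Defs.finv Dn.
Definition Dd' : fps Rz := 1 - Bq.

Lemma Ntz_E : Ntz = cst z1 * cst z1 * cst z2 * cst z3 * tt * tt.
Proof. by rewrite /Ntz fmonoE !cstM expr2; ring. Qed.

Lemma Dn0 : Dn 0%N = 1.
Proof. by rewrite /Dn fcoefM0 !fcoefD !fcoefN !fcoefM0 !SS0 fcoef10 !mulr0 subr0 mulr1. Qed.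

Lemma Bq0 : Bq 0%N = 0.
Proof. by rewrite /Bq fcoefD P0 O0 addr0. Qed.
Lemma Dd0 : Dd' 0%N = 1.
Proof. by rewrite /Dd' fcoefD fcoefN Bq0 fcoef10 subr0. Qed.

Lemma PT1_E : Pp T1 = Nn * Defs.finv Dn.
Proof.
apply: fdivP; first exact: Dn0; symmetry.
rewrite P_T1 /Dn.
transitivity (((Oo Wac + Mm Wac) * (1 - s1 * s3)) * (Uu Wab * (1 - s1 * s2))); first ring.
rewrite Iac_eq Uab_eq /Nn Ntz_E O_Wac O_Wab; ring.
Qed.

Lemma PT2_E : Pp T2 = Nn * Defs.finv Dn.
Proof.
apply: fdivP; first exact: Dn0; symmetry.
rewrite P_T2 /Dn.
transitivity (((Oo Wdc + Mm Wdc) * (1 - s1 * s3)) * (Uu Wdb * (1 - s1 * s2))); first ring.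
rewrite Idc_eq Udb_eq /Nn Ntz_E O_Wdc O_Wdb; ring.
Qed.

Lemma Ee_E : Ee = Oo T1 + Pp T1. Proof. by rewrite /Ee PT1_E. Qed.
Lemma eO : Oo T2 = Oo T1. Proof. by rewrite O_T2 O_T1. Qed.
Lemma Ee_E2 : Ee = Oo T2 + Pp T2. Proof. by rewrite /Ee PT2_E eO. Qed.

Lemma UT1_E : Uu T1 = Ee * Defs.finv Dd'.
Proof.
apply: fdivP; first exact: Dd0; symmetry.
have hU : Uu T1 = Oo T1 + Pp T1 + Mm T1 by rewrite U_eq.
rewrite Ee_E hU M_T1 /Dd'.
lcomb ((Oo T1 + Pp T1) * ((1 + Uu Wbc) * (1 - Bq) - 1)).
rewrite Ubc_eq; ring.
Qed.

Lemma irrT1_E : Oo T1 + Mm T1 = (Oo T1 + Bq * (Ee - Oo T1)) * Defs.finv Dd'.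
Proof.
apply: fdivP; first exact: Dd0; symmetry.
rewrite Ee_E M_T1 /Dd'.
lcomb ((Oo T1 + Pp T1) * ((1 + Uu Wbc) * (1 - Bq) - 1)).
rewrite Ubc_eq; ring.
Qed.

Lemma UT2_E : Uu T2 = Ee * Defs.finv Dd'.
Proof.
apply: fdivP; first exact: Dd0; symmetry.
have hU : Uu T2 = Oo T2 + Pp T2 + Mm T2 by rewrite U_eq.
have hM : Mm T2 = Bq * Uu T2 by rewrite M_T2 /Bq addrC.
rewrite Ee_E2 /Dd'.
lcomb ((Uu T2 - (Oo T2 + Pp T2 + Mm T2)) + (Mm T2 - Bq * Uu T2)).
rewrite (eq0 hU) (eq0 hM); ring.
Qed.

Lemma irrT2_E : Oo T2 + Mm T2 = (Oo T1 + Bq * (Ee - Oo T1)) * Defs.finv Dd'.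
Proof.
apply: fdivP; first exact: Dd0; symmetry.
have hG : Uu T2 * (1 - Bq) = Ee.
  rewrite UT2_E -mulrA (mulrC (Defs.finv _)).
  have := fmulV Dd0; rewrite /Dd' => ->; by rewrite mulr1.
have hM : Mm T2 = Bq * Uu T2 by rewrite M_T2 /Bq addrC.
rewrite hM eO /Dd'.
lcomb (Bq * (Uu T2 * (1 - Bq) - Ee)).
rewrite (eq0 hG); ring.
Qed.


Lemma GF_E st1 st2 st3 P :
  GF st1 st2 st3 P = Gf P (fun w => z1 ^+ st1 w * z2 ^+ st2 w * z3 ^+ st3 w).
Proof. by apply/funext => n; rewrite /GF /Gf (word_sum n P (fun w => z1 ^+ st1 w * z2 ^+ st2 w * z3 ^+ st3 w)). Qed.

Lemma Sgf_E z : Sgf z = SS z.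
Proof. by apply/funext => n; rewrite /Sgf /SS /Uu /Gf /Wb (word_sum n separableb (fun w => z ^+ rmax w)). Qed.

Lemma Tz_E : Tz = Oo T1.
Proof. by rewrite /Tz /Oo /T1 fmonoE !expr1. Qed.

Lemma Egf_E : Egf = Ee.
Proof. by rewrite /Egf /S1 /S2 /S3 !Sgf_E Tz_E. Qed.

Lemma Agf_E : Agf = Pp Wbc.
Proof.
rewrite /Agf /S2 /S3 !Sgf_E P_Wbc O_Wc.
have -> : Mm (Wc z3) = s3 * s3 * Defs.finv (s3 + 1).
  apply: fdivP; first by rewrite fcoefD SS0 fcoef10 add0r.
  by rewrite -Dc2 addrC.
rewrite fmonoE expr1; by rewrite [RHS]mulrC.
Qed.

Lemma Tz23_E : Tz23 = Oo Wbc.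
Proof. by rewrite /Tz23 /Oo /Wbc fmonoE !expr1. Qed.

Lemma Dgf_E : Dgf = Dd'.
Proof. rewrite /Dgf /Dd' /Bq Agf_E Tz23_E !subE oneE; ring. Qed.

Lemma Fgf_E : Fgf = (Oo T1 + Bq * (Ee - Oo T1)) * Defs.finv Dd'.
Proof. by rewrite /Fgf Dgf_E -Egf_E -Tz_E /Bq Agf_E Tz23_E. Qed.

Lemma sepb_cmp n w : isperm n w -> separableb (cmp w) = separableb w.
Proof. move=> pw; have [h1 h2] := sep_compE pw; apply/sepbP/sepbP; [exact: h1 | exact: h2]. Qed.

Lemma irr_eq w : separableb w && irreducible w = separableb w && ~~ reducible w.
Proof.
rewrite /irreducible; case: (boolP (separableb w)) => //= /sepbP /sep_perm [_ ->] //.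
Qed.

Lemma GF_lmin n w : isperm n w ->
  z1 ^+ lmin (cmp w) * z2 ^+ rmin (cmp w) * z3 ^+ lmax (cmp w) = T1 w.
Proof. by move=> pw; rewrite (lmin_comp pw) (rmin_comp pw) (lmax_comp pw). Qed.
Lemma GF_rmax n w : isperm n w ->
  z1 ^+ rmax (cmp w) * z2 ^+ rmin (cmp w) * z3 ^+ lmax (cmp w) = T2 w.
Proof. by move=> pw; rewrite (rmax_comp pw) (rmin_comp pw) (lmax_comp pw). Qed.

Theorem theorem8 :
  (* (i) all separable permutations: G_T = E / D *)
  (GF lmax rmax lmin allsep =1 fdiv Egf Dgf /\
   GF lmin rmin lmax allsep =1 fdiv Egf Dgf /\
   GF rmin rmax lmin allsep =1 fdiv Egf Dgf /\
   GF rmax rmin lmax allsep =1 fdiv Egf Dgf) /\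
  (* (ii) *)
  (GF lmax rmax lmin redsep =1 fsub Egf Tz /\
   GF lmax rmax lmin irrsep =1 Fgf /\
   GF rmin rmax lmin redsep =1 fsub Egf Tz /\
   GF rmin rmax lmin irrsep =1 Fgf) /\
  (* (iii) *)
  (GF lmin rmin lmax irrsep =1 Egf /\
   GF lmin rmin lmax redsep =1 fadd (fopp Tz) Fgf /\
   GF rmax rmin lmax irrsep =1 Egf /\
   GF rmax rmin lmax redsep =1 fadd (fopp Tz) Fgf).
Proof.
have DE : fdiv Egf Dgf = Ee * Defs.finv Dd' by rewrite /fdiv Egf_E Dgf_E.
have ESE : fsub Egf Tz = Ee - Oo T1 by rewrite Egf_E Tz_E.
have FE := Fgf_E.
have C1 P Q : (forall n w, isperm n w -> P (cmp w) = Q w) ->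
    GF lmin rmin lmax P = Gf Q T1.
  move=> H; rewrite GF_E Gf_comp; apply: eq_Gf => [n w pw|n w pw _]; first exact: H pw.
  exact: GF_lmin pw.
have C2 P Q : (forall n w, isperm n w -> P (cmp w) = Q w) ->
    GF rmax rmin lmax P = Gf Q T2.
  move=> H; rewrite GF_E Gf_comp; apply: eq_Gf => [n w pw|n w pw _]; first exact: H pw.
  exact: GF_rmax pw.
have Hall n w : isperm n w -> allsep (cmp w) = separableb w.
  by move=> pw; rewrite /allsep (sepb_cmp pw).
have Hred n w : isperm n w -> redsep (cmp w) = separableb w && sred w.
  by move=> pw; rewrite /redsep (sepb_cmp pw) (red_comp pw).
have Hirr n w : isperm n w -> irrsep (cmp w) = separableb w && ~~ sred w.
  by move=> pw; rewrite /irrsep irr_eq (sepb_cmp pw) (red_comp pw).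
have irrT f : Gf irrsep f = Gf (fun w => separableb w && ~~ reducible w) f.
  by apply: eq_Gf => // n w _; rewrite /irrsep irr_eq.
have e1 : Oo T1 + Pp T1 - Oo T1 = Pp T1 by ring.
have e2 : Oo T1 + Pp T2 - Oo T1 = Pp T2 by ring.
have e3 : - Oo T1 + (Oo T1 + Mm T1) = Mm T1 by ring.
have e4 : - Oo T1 + (Oo T2 + Mm T2) = Mm T2 by rewrite eO; ring.
split; [split; [|split; [|split]] | split; [split; [|split; [|split]] | split; [|split; [|split]]]].
- by rewrite GF_E DE -UT1_E.
- by rewrite (C1 _ _ Hall) DE -UT1_E.
- by rewrite GF_E DE -UT2_E.
- by rewrite (C2 _ _ Hall) DE -UT2_E.
- by rewrite GF_E ESE Ee_E e1.
- by rewrite GF_E FE irrT Gf_ired Oo_E -irrT1_E.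
- by rewrite GF_E ESE Ee_E2 eO e2.
- by rewrite GF_E FE irrT Gf_ired Oo_E -irrT2_E.
- by rewrite (C1 _ _ Hirr) Gf_isred Oo_E Egf_E Ee_E.
- by rewrite (C1 _ _ Hred) FE -irrT1_E oppE addE Tz_E e3.
- by rewrite (C2 _ _ Hirr) Gf_isred Oo_E Egf_E Ee_E2 eO.
- by rewrite (C2 _ _ Hred) FE -irrT2_E oppE addE Tz_E e4.
Qed.
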